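(* For every $n\ge 1$, the Baumslag–Solitar group $BS(1,n)=\langle a,t\mid tat^{-1}=a^n\rangle$ has property (PPH).
   Context: An isometric action on a metric space $Z$ is proper if for all $z\in Z$, $r>0$, $\{g: d(z,gz)\le r\}$ is finite. A group $G$ has property (PPH) if there exist unbounded proper Gromov-hyperbolic (geodesic) spaces $X_1,\ldots,X_l$ on which $G$ acts isometrically and cocompactly such that the diagonal action $g(x_1,\ldots,x_l)=(gx_1,\ldots,gx_l)$ on $\prod_{i=1}^lX_i$ with the $\ell^1$-metric is proper. *)

(* Defs.v *)
From Stdlib Require Import Reals List.
From mathcomp Require Import all_boot.

Set Implicit Arguments.
Unset Strict Implicit.

Record group := Group {
  gcar :> Type;
  gmul : gcar -> gcar -> gcar;
  ginv : gcar -> gcar;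
  gone : gcar;
  gmulA : forall x y z, gmul x (gmul y z) = gmul (gmul x y) z;
  gmul1l : forall x, gmul gone x = x;
  gmul1r : forall x, gmul x gone = x;
  gmulVl : forall x, gmul (ginv x) x = gone;
  gmulVr : forall x, gmul x (ginv x) = gone
}.
Arguments gmul {g}. Arguments ginv {g}. Arguments gone {g}.

Fixpoint gpow (G : group) (x : G) (n : nat) : G :=
  match n with O => gone | S m => gmul x (gpow x m) end.

Inductive gen_by (G : group) (a t : G) : G -> Prop :=
| gen_a : gen_by a t a
| gen_t : gen_by a t t
| gen_one : gen_by a t gone
| gen_mul x y : gen_by a t x -> gen_by a t y -> gen_by a t (gmul x y)
| gen_inv x : gen_by a t x -> gen_by a t (ginv x).

Definition group_hom (G H : group) (f : G -> H) : Prop :=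
  forall x y, f (gmul x y) = gmul (f x) (f y).

Definition bs_rel (G : group) (n : nat) (a t : G) : Prop :=
  gmul (gmul t a) (ginv t) = gpow a n.

(** G (with the distinguished elements a, t) is presented by
    < a, t | t a t^{-1} = a^n >: generated by a, t, the relation holds,
    and every pair satisfying the relation in any group is the image of
    (a, t) under a homomorphism. *)
Definition is_BS1n (G : group) (n : nat) (a t : G) : Prop :=
  bs_rel n a t /\ (forall g : G, gen_by a t g) /\
  (forall (H : group) (b u : H), bs_rel n b u ->
     exists f : G -> H, group_hom f /\ f a = b /\ f t = u).

Local Open Scope R_scope.

Definition is_metric {X : Type} (d : X -> X -> R) : Prop :=
  (forall x y, d x y = 0 <-> x = y) /\ (forall x y, d x y = d y x) /\
  (forall x y z, d x z <= d x y + d y z).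

Definition geodesic_space {X : Type} (d : X -> X -> R) : Prop :=
  forall x y, exists gam : R -> X, gam 0 = x /\ gam (d x y) = y /\
    forall s u, 0 <= s <= d x y -> 0 <= u <= d x y ->
      d (gam s) (gam u) = Rabs (s - u).

Definition gromov_product {X : Type} (d : X -> X -> R) (w x y : X) : R :=
  (d x w + d y w - d x y) / 2.

Definition gromov_hyperbolic {X : Type} (d : X -> X -> R) : Prop :=
  exists delta, 0 <= delta /\ forall w x y z,
    gromov_product d w x z >=
      Rmin (gromov_product d w x y) (gromov_product d w y z) - delta.

Definition seq_cv {X : Type} (d : X -> X -> R) (u : nat -> X) (L : X) : Prop :=
  forall eps, 0 < eps -> exists N, forall k, (N <= k)%nat -> d (u k) L < eps.

(** compactness (sequential, equivalent for metric spaces) *)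
Definition compact_set {X : Type} (d : X -> X -> R) (K : X -> Prop) : Prop :=
  forall u : nat -> X, (forall k, K (u k)) ->
    exists phi : nat -> nat, (forall k, (phi k < phi (S k))%nat) /\
      exists L, K L /\ seq_cv d (fun k => u (phi k)) L.

Definition proper_space {X : Type} (d : X -> X -> R) : Prop :=
  forall x r, compact_set d (fun y => d x y <= r).

Definition unbounded {X : Type} (d : X -> X -> R) : Prop :=
  forall r, exists x y, r < d x y.

Definition isometric_action (G : group) {X : Type} (d : X -> X -> R)
  (act : G -> X -> X) : Prop :=
  (forall x, act gone x = x) /\
  (forall g h x, act (gmul g h) x = act g (act h x)) /\
  (forall g x y, d (act g x) (act g y) = d x y).

Definition cocompact_action (G : group) {X : Type} (d : X -> X -> R)
  (act : G -> X -> X) : Prop :=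
  exists K : X -> Prop, compact_set d K /\
    forall x, exists g y, K y /\ act g y = x.

Definition PPH (G : group) : Prop :=
  exists l : nat, (0 < l)%nat /\
  exists (X : 'I_l -> Type) (d : forall i, X i -> X i -> R)
         (act : forall i, G -> X i -> X i),
    (forall i, is_metric (d i) /\ geodesic_space (d i) /\ proper_space (d i) /\
       gromov_hyperbolic (d i) /\ unbounded (d i) /\
       isometric_action (d i) (act i) /\ cocompact_action (d i) (act i)) /\
    (* the diagonal action on the l^1-product is proper *)
    (forall (z : forall i, X i) (r : R), exists s : list G, forall g : G,
       \big[Rplus/0]_(i < l) d i (z i) (act i g (z i)) <= r -> In g s).

(* Main.v *)
Require Import Defs.
From Stdlib Require Import Reals ZArith List Lra Lia Classical ClassicalEpsilon Rtopology.
From mathcomp Require Import all_boot zify.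
Open Scope R_scope.

Definition fl (y : R) : Z := (up y - 1)%Z.
Lemma fl_spec y : IZR (fl y) <= y < IZR (fl y) + 1.
Proof. unfold fl. destruct (archimed y). rewrite minus_IZR. lra. Qed.
Lemma fl_unique (m : Z) y : IZR m <= y < IZR m + 1 -> fl y = m.
Proof.
  intros [H1 H2]. unfold fl. assert (E : (m + 1)%Z = up y).
  { apply tech_up; rewrite plus_IZR; lra. } lia. Qed.
Lemma fl_IZR m : fl (IZR m) = m.
Proof. apply fl_unique; lra. Qed.
Lemma fl_addZ y m : fl (y + IZR m) = (fl y + m)%Z.
Proof. apply fl_unique. rewrite plus_IZR. pose proof (fl_spec y). lra. Qed.
Lemma fl_le y z : y <= z -> (fl y <= fl z)%Z.
Proof.
  intros H. pose proof (fl_spec y). pose proof (fl_spec z).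
  destruct (Z.le_gt_cases (fl y) (fl z)) as [|Hc]; auto.
  assert (Hc' : (fl z + 1 <= fl y)%Z) by lia. apply IZR_le in Hc'. rewrite plus_IZR in Hc'. lra. Qed.
Lemma fl_le_IZR y m : IZR m <= y -> (m <= fl y)%Z.
Proof. intros H. rewrite <- (fl_IZR m). apply fl_le; auto. Qed.

Definition frac (y : R) : R := y - IZR (fl y).
Lemma frac_bounds y : 0 <= frac y < 1.
Proof. unfold frac. pose proof (fl_spec y). lra. Qed.

Definition isZ (y : R) : Prop := exists m : Z, y = IZR m.
Lemma isZ_IZR m : isZ (IZR m). Proof. exists m; auto. Qed.
Lemma isZ_add a b : isZ a -> isZ b -> isZ (a + b).
Proof. intros [m ->] [k ->]. exists (m + k)%Z. rewrite plus_IZR; auto. Qed.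
Lemma isZ_opp a : isZ a -> isZ (- a).
Proof. intros [m ->]. exists (- m)%Z. rewrite opp_IZR; auto. Qed.
Lemma isZ_sub a b : isZ a -> isZ b -> isZ (a - b).
Proof. intros. unfold Rminus. apply isZ_add; auto. apply isZ_opp; auto. Qed.
Lemma isZ_mul a b : isZ a -> isZ b -> isZ (a * b).
Proof. intros [m ->] [k ->]. exists (m * k)%Z. rewrite mult_IZR; auto. Qed.
Lemma isZ_INR k : isZ (INR k). Proof. exists (Z.of_nat k). apply INR_IZR_INZ. Qed.

Lemma frac_addZ y m : isZ m -> frac (y + m) = frac y.
Proof. intros [k ->]. unfold frac. rewrite fl_addZ plus_IZR. ring. Qed.
Lemma frac_eq_iff a b : frac a = frac b <-> isZ (a - b).
Proof.
  split.
  - unfold frac. intros H. exists (fl a - fl b)%Z. rewrite minus_IZR. lra.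
  - intros H. replace a with (b + (a - b)) by ring. apply frac_addZ; auto. Qed.
Lemma frac_frac y : frac (frac y) = frac y.
Proof. unfold frac at 2. unfold Rminus. apply frac_addZ. apply isZ_opp, isZ_IZR. Qed.
Lemma frac_of01 y : 0 <= y < 1 -> frac y = y.
Proof. intros H. unfold frac. rewrite (fl_unique 0 y); simpl; lra. Qed.
Lemma frac_mulZ M y : isZ M -> frac (M * frac y) = frac (M * y).
Proof. intros HM. apply frac_eq_iff. unfold frac.
  replace (M * (y - IZR (fl y)) - M * y) with (- (M * IZR (fl y))) by ring.
  apply isZ_opp, isZ_mul; auto; apply isZ_IZR. Qed.
Lemma frac_plus_frac y z : frac (frac y + z) = frac (y + z).
Proof. apply frac_eq_iff. unfold frac. replace (y - IZR (fl y) + z - (y + z)) with (- IZR (fl y)) by ring.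
  apply isZ_opp, isZ_IZR. Qed.
Lemma frac_isZ y : isZ y -> frac y = 0.
Proof. intros H. replace y with (0 + y) by ring. rewrite frac_addZ; auto. apply frac_of01; lra. Qed.
Lemma frac_shift_eq x y c : frac (x + c) = frac (y + c) <-> frac x = frac y.
Proof. rewrite !frac_eq_iff. replace (x + c - (y + c)) with (x - y) by ring. tauto. Qed.

Definition pw (n : nat) (k : Z) : R := powerRZ (INR n) k.
Lemma INRn_pos n : (1 <= n)%coq_nat -> 0 < INR n.
Proof. intros H. apply lt_0_INR. lia. Qed.
Lemma pw_pos n k : (1 <= n)%coq_nat -> 0 < pw n k.
Proof. intros H. apply powerRZ_lt, INRn_pos; auto. Qed.
Lemma pw_add n k1 k2 : (1 <= n)%coq_nat -> pw n (k1 + k2) = pw n k1 * pw n k2.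
Proof. intros H. unfold pw. apply powerRZ_add. pose proof (INRn_pos n H). lra. Qed.
Lemma pw_0 n : pw n 0 = 1. Proof. reflexivity. Qed.
Lemma pw_1 n : pw n 1 = INR n. Proof. unfold pw; simpl; ring. Qed.
Lemma pw_nat n (e : nat) : pw n (Z.of_nat e) = INR n ^ e.
Proof. unfold pw. rewrite <- pow_powerRZ. auto. Qed.
Lemma pw_isZ n k : (0 <= k)%Z -> isZ (pw n k).
Proof. intros H. rewrite <- (Z2Nat.id k H). rewrite pw_nat. rewrite <- pow_INR. apply isZ_INR. Qed.
Lemma pw_opp n k : (1 <= n)%coq_nat -> pw n (- k) * pw n k = 1.
Proof. intros H. rewrite <- pw_add; auto. replace (- k + k)%Z with 0%Z by lia. auto. Qed.
Lemma pw_ge1 n k : (1 <= n)%coq_nat -> (0 <= k)%Z -> 1 <= pw n k.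
Proof. intros H Hk. rewrite <- (Z2Nat.id k Hk). rewrite pw_nat. apply pow_R1_Rle.
  apply (le_INR 1); auto. Qed.
Lemma pw_mono n k1 k2 : (1 <= n)%coq_nat -> (k1 <= k2)%Z -> pw n k1 <= pw n k2.
Proof. intros H Hk. replace k2 with (k1 + (k2 - k1))%Z by lia. rewrite pw_add; auto.
  pose proof (pw_ge1 n (k2 - k1) H ltac:(lia)). pose proof (pw_pos n k1 H). nra. Qed.
Lemma pw_one k : pw 1 k = 1.
Proof. unfold pw. simpl INR. destruct k; simpl; auto. rewrite pow1; auto. rewrite pow1; field. Qed.

Definition inZn (n : nat) (y : R) : Prop := exists e : Z, (0 <= e)%Z /\ isZ (y * pw n e).
Lemma inZn_IZR n m : inZn n (IZR m).
Proof. exists 0%Z. split. lia. rewrite pw_0 Rmult_1_r. apply isZ_IZR. Qed.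
Lemma inZn_add n a b : (1 <= n)%coq_nat -> inZn n a -> inZn n b -> inZn n (a + b).
Proof. intros H [e1 [He1 H1]] [e2 [He2 H2]]. exists (e1 + e2)%Z. split. lia.
  rewrite pw_add; auto. replace ((a + b) * (pw n e1 * pw n e2)) with
   ((a * pw n e1) * pw n e2 + (b * pw n e2) * pw n e1) by ring.
  apply isZ_add; apply isZ_mul; auto; apply pw_isZ; auto. Qed.
Lemma inZn_opp n a : inZn n a -> inZn n (- a).
Proof. intros [e [He H1]]. exists e. split; auto. replace (- a * pw n e) with (- (a * pw n e)) by ring.
  apply isZ_opp; auto. Qed.
Lemma inZn_mulpw n a k : (1 <= n)%coq_nat -> inZn n a -> inZn n (pw n k * a).
Proof. intros H [e [He H1]]. exists (e + Z.abs k)%Z. split. lia.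
  replace (pw n k * a * pw n (e + Z.abs k)) with ((a * pw n e) * pw n (k + Z.abs k)).
  - apply isZ_mul; auto. apply pw_isZ; lia.
  - rewrite !pw_add; auto. ring. Qed.
Lemma inZn_frac n a : inZn n a -> inZn n (frac a).
Proof. intros [e [He H1]]. exists e. split; auto. unfold frac.
  replace ((a - IZR (fl a)) * pw n e) with (a * pw n e - IZR (fl a) * pw n e) by ring.
  apply isZ_sub; auto. apply isZ_mul. apply isZ_IZR. apply pw_isZ; auto. Qed.
Lemma inZn_0 n : inZn n 0. Proof. apply (inZn_IZR n 0). Qed.

Lemma geod_from_ub {X : Type} (d : X -> X -> R) : is_metric d ->
  (forall x y, exists gam : R -> X, gam 0 = x /\ gam (d x y) = y /\
     forall a b, 0 <= a <= d x y -> 0 <= b <= d x y -> d (gam a) (gam b) <= Rabs (a - b)) ->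
  geodesic_space d.
Proof.
  intros [H0 [Hs Ht]] H x y. destruct (H x y) as [gam [G0 [G1 Gu]]].
  exists gam. split; auto. split; auto. intros a b Ha Hb.
  assert (Hd : 0 <= d x y). { pose proof (Ht x y x). rewrite (Hs y x) in H1.
    assert (d x x = 0) by (apply H0; auto). lra. }
  assert (forall a b, 0 <= a <= d x y -> 0 <= b <= d x y -> a <= b -> d (gam a) (gam b) >= b - a).
  { intros a' b' Ha' Hb' Hab.
    pose proof (Ht x (gam a') y). pose proof (Ht (gam a') (gam b') y).
    pose proof (Gu 0 a' ltac:(lra) Ha'). pose proof (Gu b' (d x y) Hb' ltac:(lra)).
    rewrite G0 in H3. rewrite G1 in H4.
    rewrite Rabs_left1 in H3; [|lra]. rewrite Rabs_left1 in H4; [|lra]. lra. }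
  pose proof (Gu a b Ha Hb).
  destruct (Rle_dec a b).
  - pose proof (H1 a b Ha Hb r). rewrite Rabs_left1 in H2; [|lra]. rewrite Rabs_left1; lra.
  - pose proof (H1 b a Hb Ha ltac:(lra)). rewrite Hs in H3. rewrite Rabs_right in H2; [|lra].
    rewrite Rabs_right; lra.
Qed.

Lemma hyp_from_U {X : Type} (d : X -> X -> R) (U : X -> X -> R) (h : X -> R) (L : R) :
  0 <= L -> (forall x y, U x y = U y x) ->
  (forall x y z, U x z <= Rmax (U x y) (U y z) + L) ->
  (forall x y, 2 * U x y - h x - h y <= d x y <= 2 * U x y - h x - h y + 2) ->
  gromov_hyperbolic d.
Proof.
  intros HL Hs Hu Hd. exists (2 * L + 3). split. lra.
  intros w x y z. unfold gromov_product.
  pose proof (Hd x w). pose proof (Hd z w). pose proof (Hd x z).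
  pose proof (Hd y w). pose proof (Hd x y). pose proof (Hd y z).
  pose proof (Hu x y z). pose proof (Hu x w z). pose proof (Hu y x w). pose proof (Hu y z w).
  pose proof (Hs y x). pose proof (Hs w z). pose proof (Hs z w).
  unfold Rmax in *. unfold Rmin.
  repeat match goal with
  | H : context [Rle_dec ?a ?b] |- _ => destruct (Rle_dec a b)
  | |- context [Rle_dec ?a ?b] => destruct (Rle_dec a b)
  end; lra.
Qed.

Definition incr (phi : nat -> nat) : Prop := forall k, (phi k < phi (S k))%coq_nat.
Lemma incr_ge phi : incr phi -> forall k, (k <= phi k)%coq_nat.
Proof. intros H k. induction k. lia. pose proof (H k). lia. Qed.
Lemma incr_mono phi : incr phi -> forall k m, (k <= m)%coq_nat -> (phi k <= phi m)%coq_nat.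
Proof. intros H k m Hkm. induction Hkm. lia. pose proof (H m). lia. Qed.
Lemma incr_comp phi psi : incr phi -> incr psi -> incr (fun k => phi (psi k)).
Proof. intros H1 H2 k. pose proof (H2 k). 
  pose proof (incr_mono phi H1 (S (psi k)) (psi (S k)) ltac:(lia)). pose proof (H1 (psi k)). lia. Qed.

Lemma choice_nat (Q : nat -> nat -> Prop) : (forall N, exists k, Q N k) -> exists g, forall N, Q N (g N).
Proof. intros H. exists (fun N => proj1_sig (constructive_indefinite_description _ (H N))).
  intros N. exact (proj2_sig (constructive_indefinite_description _ (H N))). Qed.

Fixpoint build (g : nat -> nat -> nat) (k : nat) : nat :=
  match k with O => g O O | S k' => g k (S (build g k')) end.

Lemma subseq_inf (Q : nat -> nat -> Prop) :
  (forall m N, exists k, (N <= k)%coq_nat /\ Q m k) ->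
  exists phi, incr phi /\ forall k, Q k (phi k).
Proof.
  intros H.
  pose (g := fun m N => proj1_sig (constructive_indefinite_description _ (H m N))).
  assert (Hg : forall m N, (N <= g m N)%coq_nat /\ Q m (g m N)).
  { intros m N. exact (proj2_sig (constructive_indefinite_description _ (H m N))). }
  exists (build g). split.
  - intros k. simpl. pose proof (Hg (S k) (S (build g k))). lia.
  - intros k. destruct k; simpl; apply Hg.
Qed.

Lemma pigeon (M : nat) : forall (c : nat -> nat), (forall k, (c k < M)%coq_nat) ->
  exists phi, incr phi /\ exists v, forall k, c (phi k) = v.
Proof.
  induction M; intros c Hc. { pose proof (Hc 0%nat). lia. }
  destruct (classic (forall N, exists k, (N <= k)%coq_nat /\ c k = M)) as [Hi|Hf].
  - destruct (subseq_inf (fun _ k => c k = M)) as [phi [Hp Hq]].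
    { intros _ N. apply Hi. }
    exists phi. split; auto. exists M. auto.
  - apply not_all_ex_not in Hf. destruct Hf as [N HN].
    assert (HN' : forall k, (N <= k)%coq_nat -> c k <> M).
    { intros k Hk E. apply HN. exists k. auto. }
    destruct (IHM (fun k => c (k + N)%nat)) as [phi [Hp [v Hv]]].
    { intros k. pose proof (Hc (k + N)%nat). pose proof (HN' (k + N)%nat ltac:(lia)). lia. }
    exists (fun k => (phi k + N)%nat). split.
    + intros k. pose proof (Hp k). lia.
    + exists v. auto.
Qed.

Definition cvR (u : nat -> R) (l : R) : Prop :=
  forall eps, 0 < eps -> exists N, forall k, (N <= k)%coq_nat -> Rabs (u k - l) < eps.

Lemma cvR_sub u l phi : incr phi -> cvR u l -> cvR (fun k => u (phi k)) l.
Proof. intros Hp H eps He. destruct (H eps He) as [N HN]. exists N. intros k Hk.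
  apply HN. pose proof (incr_ge phi Hp k). lia. Qed.

Lemma BW (u : nat -> R) a b : (forall k, a <= u k <= b) ->
  exists phi, incr phi /\ exists l, a <= l <= b /\ cvR (fun k => u (phi k)) l.
Proof.
  intros Hu. destruct (Bolzano_Weierstrass u (fun c => a <= c <= b) (compact_P3 a b) Hu) as [l Hl].
  assert (Hc : forall eps N, 0 < eps -> exists p, (N <= p)%coq_nat /\ Rabs (u p - l) < eps).
  { intros eps N He. destruct (Hl (disc l (mkposreal eps He)) N) as [p [Hp1 Hp2]].
    - exists (mkposreal eps He). intros y Hy. exact Hy.
    - exists p. split; auto. }
  assert (Hab : a <= l <= b).
  { split.
    - destruct (Rle_dec a l); auto. destruct (Hc (a - l) 0%nat ltac:(lra)) as [p [_ Hp]].
      pose proof (Hu p). apply Rabs_def2 in Hp. lra.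
    - destruct (Rle_dec l b); auto. destruct (Hc (l - b) 0%nat ltac:(lra)) as [p [_ Hp]].
      pose proof (Hu p). apply Rabs_def2 in Hp. lra. }
  destruct (subseq_inf (fun m p => Rabs (u p - l) < / (INR m + 1))) as [phi [Hp Hq]].
  { intros m N. apply Hc. apply Rinv_0_lt_compat. pose proof (pos_INR m). lra. }
  exists phi. split; auto. exists l. split; auto.
  intros eps He. destruct (archimed (/ eps)) as [H1 _].
  exists (Z.to_nat (up (/ eps))). intros k Hk.
  eapply Rlt_le_trans. apply Hq.
  assert (Hk' : IZR (up (/ eps)) <= INR k).
  { rewrite INR_IZR_INZ. apply IZR_le. 
    assert (0 < up (/ eps))%Z. { apply lt_IZR. pose proof (Rinv_0_lt_compat eps He). lra. }
    lia. }
  pose proof (Rinv_0_lt_compat eps He).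
  rewrite <- (Rinv_inv eps). apply Rinv_le_contravar. lra. lra.
Qed.

Definition T2 (n : nat) := {p : R * R | frac (snd p) = snd p /\ inZn n (snd p)}.
Definition sh {n} (p : T2 n) : R := fst (proj1_sig p).
Definition rh {n} (p : T2 n) : R := snd (proj1_sig p).
Lemma T2eq {n} (p q : T2 n) : sh p = sh q -> rh p = rh q -> p = q.
Proof. destruct p as [[a b] Hp], q as [[c e] Hq]. unfold sh, rh; simpl. intros -> ->.
  f_equal. apply proof_irrelevance. Qed.
Lemma rh_frac {n} (p : T2 n) : frac (rh p) = rh p.
Proof. destruct p as [x [H1 H2]]. exact H1. Qed.
Lemma rh_inZn {n} (p : T2 n) : inZn n (rh p).
Proof. destruct p as [x [H1 H2]]. exact H2. Qed.

Definition liftT n (J : Z) (p : T2 n) : R := frac (pw n (J - fl (sh p)) * rh p).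
Definition merged n J (p q : T2 n) : Prop := liftT n J p = liftT n J q.

Lemma liftT_up n J J' p : (1 <= n)%coq_nat -> (J <= J')%Z ->
  liftT n J' p = frac (pw n (J' - J) * liftT n J p).
Proof. intros Hn H. unfold liftT. rewrite frac_mulZ. 2: apply pw_isZ; lia.
  f_equal. replace (J' - fl (sh p))%Z with ((J' - J) + (J - fl (sh p)))%Z by lia.
  rewrite pw_add; auto. ring. Qed.
Lemma merged_up n J J' p q : (1 <= n)%coq_nat -> (J <= J')%Z -> merged n J p q -> merged n J' p q.
Proof. unfold merged. intros Hn H E. rewrite !(liftT_up n J J'); auto. rewrite E; auto. Qed.

Lemma lift_eventually n p : (1 <= n)%coq_nat -> exists J0, forall J, (J0 <= J)%Z -> liftT n J p = 0.
Proof. intros Hn. destruct (rh_inZn p) as [e [He Hz]]. exists (fl (sh p) + e)%Z. intros J HJ.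
  unfold liftT. apply frac_isZ. replace (J - fl (sh p))%Z with ((J - fl (sh p) - e) + e)%Z by lia.
  rewrite pw_add; auto. replace (pw n (J - fl (sh p) - e) * pw n e * rh p) with
    (pw n (J - fl (sh p) - e) * (rh p * pw n e)) by ring. apply isZ_mul; auto. apply pw_isZ; lia. Qed.

Lemma least_nat (P : nat -> Prop) : (exists i, P i) -> exists i, P i /\ forall j, (j < i)%coq_nat -> ~ P j.
Proof.
  intros [i Hi]. apply NNPP. intros Hno.
  assert (forall k j, (j <= k)%coq_nat -> ~ P j).
  { induction k; intros j Hj Pj.
    - apply Hno. exists j. split; auto. intros. lia.
    - destruct (Nat.eq_dec j (S k)).
      + subst. apply Hno. exists (S k). split; auto. intros j' Hj'. apply IHk. lia.
      + apply (IHk j); auto. lia. }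
  apply (H i i); auto.
Qed.

Definition zb {n} (p q : T2 n) : Z := Z.max (fl (sh p)) (fl (sh q)).
Lemma merge_exists n (p q : T2 n) : (1 <= n)%coq_nat -> exists i, merged n (zb p q + Z.of_nat i) p q.
Proof. intros Hn. destruct (lift_eventually n p Hn) as [J1 H1]. destruct (lift_eventually n q Hn) as [J2 H2].
  exists (Z.to_nat (Z.max J1 J2 - zb p q)). unfold merged. rewrite H1. rewrite H2. auto. lia. lia. Qed.

Definition istar n (Hn : (1 <= n)%coq_nat) (p q : T2 n) : nat :=
  proj1_sig (constructive_indefinite_description _ (least_nat _ (merge_exists n p q Hn))).
Lemma istar_spec n Hn (p q : T2 n) : merged n (zb p q + Z.of_nat (istar n Hn p q)) p q /\
  forall j, (j < istar n Hn p q)%coq_nat -> ~ merged n (zb p q + Z.of_nat j) p q.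
Proof. unfold istar. exact (proj2_sig (constructive_indefinite_description _ (least_nat _ (merge_exists n p q Hn)))). Qed.

Definition ust n Hn (p q : T2 n) : R := Rmax (Rmax (sh p) (sh q)) (IZR (zb p q + Z.of_nat (istar n Hn p q))).
Definition dT n Hn (p q : T2 n) : R := 2 * ust n Hn p q - sh p - sh q.

Lemma ust_ge n Hn (p q : T2 n) : sh p <= ust n Hn p q /\ sh q <= ust n Hn p q.
Proof. unfold ust. pose proof (Rmax_l (Rmax (sh p) (sh q)) (IZR (zb p q + Z.of_nat (istar n Hn p q)))).
  pose proof (Rmax_l (sh p) (sh q)). pose proof (Rmax_r (sh p) (sh q)). lra. Qed.

Lemma T3 n Hn (p q : T2 n) : merged n (fl (ust n Hn p q)) p q.
Proof. destruct (istar_spec n Hn p q) as [H _]. eapply merged_up; eauto.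
  apply fl_le_IZR. unfold ust. apply Rmax_r. Qed.

Lemma T2lem n Hn (p q : T2 n) u : sh p <= u -> sh q <= u -> merged n (fl u) p q -> ust n Hn p q <= u.
Proof. intros Hp Hq Hm. unfold ust. apply Rmax_lub. apply Rmax_lub; auto.
  destruct (istar_spec n Hn p q) as [_ Hl].
  assert (Hb : (zb p q <= fl u)%Z). { unfold zb. pose proof (fl_le _ _ Hp). pose proof (fl_le _ _ Hq). lia. }
  assert (HJ : (zb p q + Z.of_nat (istar n Hn p q) <= fl u)%Z).
  { destruct (Z.le_gt_cases (zb p q + Z.of_nat (istar n Hn p q)) (fl u)); auto.
    exfalso. apply (Hl (Z.to_nat (fl u - zb p q))). lia.
    replace (zb p q + Z.of_nat (Z.to_nat (fl u - zb p q)))%Z with (fl u) by lia. auto. }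
  apply IZR_le in HJ. pose proof (fl_spec u). lra. Qed.

Lemma dT_le n Hn (p q : T2 n) u : sh p <= u -> sh q <= u -> merged n (fl u) p q -> dT n Hn p q <= 2 * u - sh p - sh q.
Proof. intros. pose proof (T2lem n Hn p q u H H0 H1). unfold dT. lra. Qed.

Lemma dT_ge n Hn (p q : T2 n) : Rabs (sh p - sh q) <= dT n Hn p q.
Proof. unfold dT. destruct (ust_ge n Hn p q). apply Rabs_le. lra. Qed.

Lemma merged_sym n J (p q : T2 n) : merged n J p q -> merged n J q p.
Proof. unfold merged; auto. Qed.
Lemma merged_trans n J (p q r : T2 n) : merged n J p q -> merged n J q r -> merged n J p r.
Proof. unfold merged; intros; congruence. Qed.
Lemma merged_refl n J (p : T2 n) : merged n J p p.
Proof. unfold merged; auto. Qed.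

Lemma ust_sym n Hn (p q : T2 n) : ust n Hn p q = ust n Hn q p.
Proof. apply Rle_antisym; apply T2lem; try apply ust_ge; apply merged_sym, T3. Qed.

Lemma ust_ultra n Hn (p q r : T2 n) : ust n Hn p r <= Rmax (ust n Hn p q) (ust n Hn q r).
Proof. pose proof (ust_ge n Hn p q). pose proof (ust_ge n Hn q r).
  pose proof (Rmax_l (ust n Hn p q) (ust n Hn q r)). pose proof (Rmax_r (ust n Hn p q) (ust n Hn q r)).
  apply T2lem; try lra. eapply merged_trans.
  - eapply merged_up. exact Hn. 2: apply T3. apply fl_le. exact H1.
  - eapply merged_up. exact Hn. 2: apply T3. apply fl_le. exact H2. Qed.

Lemma dT_metric n Hn : is_metric (dT n Hn).
Proof. split; [|split].
  - intros p q. split.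
    + intros H0. pose proof (dT_ge n Hn p q). pose proof (ust_ge n Hn p q). unfold dT in *.
      assert (Hs : sh p = sh q) by (revert H; unfold Rabs; destruct Rcase_abs; intros; lra).
      assert (Hu : ust n Hn p q = sh p) by lra.
      pose proof (T3 n Hn p q). rewrite Hu in H2. unfold merged, liftT in H2.
      rewrite <- Hs in H2. rewrite Z.sub_diag pw_0 !Rmult_1_l !rh_frac in H2.
      apply T2eq; auto.
    + intros ->. pose proof (dT_le n Hn q q (sh q) (Rle_refl _) (Rle_refl _) (merged_refl _ _ _)).
      pose proof (dT_ge n Hn q q). rewrite Rminus_diag Rabs_R0 in H0. lra.
  - intros p q. unfold dT. rewrite ust_sym. ring.
  - intros p q r. unfold dT. pose proof (ust_ultra n Hn p q r). pose proof (ust_ge n Hn p q).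
    pose proof (ust_ge n Hn q r). unfold Rmax in H. destruct (Rle_dec _ _); lra.
Qed.

Lemma dT_hyp n Hn : gromov_hyperbolic (dT n Hn).
Proof. apply (hyp_from_U (dT n Hn) (ust n Hn) sh 0). lra. apply ust_sym.
  intros. rewrite Rplus_0_r. apply ust_ultra. intros. unfold dT. lra. Qed.

Lemma up_proof n (Hn : (1 <= n)%coq_nat) (p : T2 n) h :
  frac (snd (h, frac (pw n (fl h - fl (sh p)) * rh p))) = snd (h, frac (pw n (fl h - fl (sh p)) * rh p))
  /\ inZn n (snd (h, frac (pw n (fl h - fl (sh p)) * rh p))).
Proof. simpl. split. apply frac_frac. apply inZn_frac, inZn_mulpw; auto. apply rh_inZn. Qed.
Definition upT n Hn (p : T2 n) (h : R) : T2 n := exist _ (h, frac (pw n (fl h - fl (sh p)) * rh p)) (up_proof n Hn p h).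
Lemma sh_up n Hn p h : sh (upT n Hn p h) = h. Proof. reflexivity. Qed.
Lemma liftT_of_up n Hn p h J : (fl h <= J)%Z -> liftT n J (upT n Hn p h) = liftT n J p.
Proof. intros H. unfold liftT. rewrite sh_up. unfold rh at 1. simpl. rewrite frac_mulZ.
  2: apply pw_isZ; lia. f_equal. rewrite <- Rmult_assoc. rewrite <- pw_add; auto. f_equal. f_equal. lia. Qed.
Lemma up_self n Hn p : upT n Hn p (sh p) = p.
Proof. apply T2eq; auto. unfold rh at 1. simpl. rewrite Z.sub_diag pw_0 Rmult_1_l. apply rh_frac. Qed.

Lemma dist_up_same n Hn p h1 h2 : dT n Hn (upT n Hn p h1) (upT n Hn p h2) <= Rabs (h1 - h2).
Proof. eapply Rle_trans. apply (dT_le _ _ _ _ (Rmax h1 h2)); rewrite ?sh_up. apply Rmax_l. apply Rmax_r.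
  unfold merged. rewrite !liftT_of_up; auto; apply fl_le; [apply Rmax_r | apply Rmax_l].
  rewrite !sh_up. unfold Rmax. destruct (Rle_dec h1 h2). rewrite Rabs_left1; lra. rewrite Rabs_right; lra. Qed.

Lemma dist_up_merge n Hn p q u h1 h2 : merged n (fl u) p q -> h1 <= u -> h2 <= u ->
  dT n Hn (upT n Hn p h1) (upT n Hn q h2) <= 2 * u - h1 - h2.
Proof. intros Hm H1 H2. eapply Rle_trans. apply (dT_le _ _ _ _ u); rewrite ?sh_up; auto.
  unfold merged. rewrite !liftT_of_up; auto; apply fl_le; auto. rewrite !sh_up. lra. Qed.

Lemma dT_geod n Hn : geodesic_space (dT n Hn).
Proof.
  apply geod_from_ub. apply dT_metric. intros p q.
  set (L1 := ust n Hn p q - sh p). set (D := dT n Hn p q).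
  assert (HD : D = L1 + (ust n Hn p q - sh q)) by (unfold D, L1, dT; ring).
  assert (HL1 : L1 = ust n Hn p q - sh p) by reflexivity. clearbody L1 D.
  pose proof (ust_ge n Hn p q) as [Gp Gq]. pose proof (T3 n Hn p q) as Hm.
  exists (fun t => if Rle_dec t L1 then upT n Hn p (sh p + t) else upT n Hn q (sh q + D - t)).
  split; [|split].
  - destruct (Rle_dec 0 L1); [|lra]. rewrite Rplus_0_r. apply up_self.
  - destruct (Rle_dec D L1).
    + assert (E : ust n Hn p q = sh q) by lra. apply T2eq. rewrite sh_up. lra.
      unfold rh at 1. simpl. replace (sh p + D) with (ust n Hn p q) by (lra).
      pose proof Hm as Hm'. unfold merged, liftT in Hm'. rewrite Hm'. rewrite E Z.sub_diag pw_0 Rmult_1_l.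
      apply rh_frac.
    + replace (sh q + D - D) with (sh q) by ring. apply up_self.
  - intros a b Ha Hb.
    assert (Hgen : forall a b, 0 <= a <= D -> 0 <= b <= D -> a <= L1 -> ~ b <= L1 ->
              dT n Hn (upT n Hn p (sh p + a)) (upT n Hn q (sh q + D - b)) <= Rabs (a - b)).
    { intros a' b' Ha' Hb' H1 H2. apply Rnot_le_lt in H2. eapply Rle_trans. apply (dist_up_merge _ _ _ _ (ust n Hn p q)); auto.
      lra. lra. rewrite Rabs_left1; lra. }
    destruct (Rle_dec a L1), (Rle_dec b L1).
    + eapply Rle_trans. apply dist_up_same. right. f_equal. ring.
    + apply Hgen; auto.
    + destruct (dT_metric n Hn) as [_ [Hs _]]. rewrite Hs. rewrite Rabs_minus_sym. apply Hgen; auto.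
    + eapply Rle_trans. apply dist_up_same. right. rewrite Rabs_minus_sym. f_equal. ring.
Qed.

(* the concrete group H = Z[1/n] x| Z *)
Definition Hc (n : nat) := {p : Z * R | inZn n (snd p)}.
Definition hk {n} (h : Hc n) : Z := fst (proj1_sig h).
Definition hb {n} (h : Hc n) : R := snd (proj1_sig h).
Lemma hb_inZn {n} (h : Hc n) : inZn n (hb h). Proof. exact (proj2_sig h). Qed.
Lemma Heq {n} (h1 h2 : Hc n) : hk h1 = hk h2 -> hb h1 = hb h2 -> h1 = h2.
Proof. destruct h1 as [[a b] H1], h2 as [[c e] H2]. unfold hk, hb; simpl. intros -> ->.
  f_equal. apply proof_irrelevance. Qed.
Definition mkH n (k : Z) (b : R) (H : inZn n b) : Hc n := exist (fun p => inZn n (snd p)) (k, b) H.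

Definition hmul n (Hn : (1 <= n)%coq_nat) (h1 h2 : Hc n) : Hc n :=
  mkH n (hk h1 + hk h2)%Z (hb h1 + pw n (hk h1) * hb h2)
    (inZn_add n _ _ Hn (hb_inZn h1) (inZn_mulpw n _ _ Hn (hb_inZn h2))).
Definition hinv n (Hn : (1 <= n)%coq_nat) (h : Hc n) : Hc n :=
  mkH n (- hk h)%Z (- (pw n (- hk h) * hb h)) (inZn_opp n _ (inZn_mulpw n _ _ Hn (hb_inZn h))).
Definition hone n : Hc n := mkH n 0%Z 0 (inZn_0 n).

Lemma hmulA n Hn x y z : hmul n Hn x (hmul n Hn y z) = hmul n Hn (hmul n Hn x y) z.
Proof. apply Heq; unfold hmul, hinv, hone, mkH, hk, hb; cbn [proj1_sig fst snd]; fold (@hk n) (@hb n). lia.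
  rewrite pw_add; auto. ring. Qed.
Lemma hmul1l n Hn x : hmul n Hn (hone n) x = x.
Proof. apply Heq; unfold hmul, hinv, hone, mkH, hk, hb; cbn [proj1_sig fst snd]; fold (@hk n) (@hb n). lia. rewrite pw_0. ring. Qed.
Lemma hmul1r n Hn x : hmul n Hn x (hone n) = x.
Proof. apply Heq; unfold hmul, hinv, hone, mkH, hk, hb; cbn [proj1_sig fst snd]; fold (@hk n) (@hb n). lia. ring. Qed.
Lemma hmulVl n Hn x : hmul n Hn (hinv n Hn x) x = hone n.
Proof. apply Heq; unfold hmul, hinv, hone, mkH, hk, hb; cbn [proj1_sig fst snd]; fold (@hk n) (@hb n). lia. ring. Qed.
Lemma hmulVr n Hn x : hmul n Hn x (hinv n Hn x) = hone n.
Proof. apply Heq; unfold hmul, hinv, hone, mkH, hk, hb; cbn [proj1_sig fst snd]; fold (@hk n) (@hb n). lia.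
  set (k := fst (proj1_sig x)). set (b := snd (proj1_sig x)).
  pose proof (pw_opp n k Hn) as E.
  replace (b + pw n k * - (pw n (- k) * b)) with (b * (1 - pw n (- k) * pw n k)) by ring.
  rewrite E. ring. Qed.

Definition Hgrp n Hn : group := @Defs.Group (Hc n) (hmul n Hn) (hinv n Hn) (hone n)
  (hmulA n Hn) (hmul1l n Hn) (hmul1r n Hn) (hmulVl n Hn) (hmulVr n Hn).

Lemma hk_hmul n Hn h1 h2 : hk (hmul n Hn h1 h2) = (hk h1 + hk h2)%Z. Proof. reflexivity. Qed.
Lemma hb_hmul n Hn h1 h2 : hb (hmul n Hn h1 h2) = hb h1 + pw n (hk h1) * hb h2. Proof. reflexivity. Qed.
Lemma hk_hinv n Hn h : hk (hinv n Hn h) = (- hk h)%Z. Proof. reflexivity. Qed.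
Lemma hb_hinv n Hn h : hb (hinv n Hn h) = - (pw n (- hk h) * hb h). Proof. reflexivity. Qed.
Lemma hk_hone n : hk (hone n) = 0%Z. Proof. reflexivity. Qed.
Lemma hb_hone n : hb (hone n) = 0. Proof. reflexivity. Qed.
Lemma hk_mkH n k b H : hk (mkH n k b H) = k. Proof. reflexivity. Qed.
Lemma hb_mkH n k b H : hb (mkH n k b H) = b. Proof. reflexivity. Qed.

Lemma actT_proof n (Hn : (1 <= n)%coq_nat) (h : Hc n) (p : T2 n) :
  let x := (sh p - IZR (hk h), frac (rh p + pw n (fl (sh p) - hk h) * hb h)) in
  frac (snd x) = snd x /\ inZn n (snd x).
Proof. simpl. split. apply frac_frac. apply inZn_frac, inZn_add; auto. apply rh_inZn.
  apply inZn_mulpw; auto. apply hb_inZn. Qed.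
Definition actT n Hn (h : Hc n) (p : T2 n) : T2 n :=
  exist _ (sh p - IZR (hk h), frac (rh p + pw n (fl (sh p) - hk h) * hb h)) (actT_proof n Hn h p).
Lemma sh_actT n Hn h p : sh (actT n Hn h p) = sh p - IZR (hk h). Proof. reflexivity. Qed.
Lemma rh_actT n Hn h p : rh (actT n Hn h p) = frac (rh p + pw n (fl (sh p) - hk h) * hb h). Proof. reflexivity. Qed.
Lemma fl_subZ y k : fl (y - IZR k) = (fl y - k)%Z.
Proof. unfold Rminus. rewrite <- opp_IZR. rewrite fl_addZ. lia. Qed.

Lemma actT_one n Hn p : actT n Hn (hone n) p = p.
Proof. apply T2eq. rewrite sh_actT hk_hone. ring.
  rewrite rh_actT hb_hone. rewrite Rmult_0_r Rplus_0_r. apply rh_frac. Qed.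
Lemma actT_mul n Hn h1 h2 p : actT n Hn (hmul n Hn h1 h2) p = actT n Hn h1 (actT n Hn h2 p).
Proof. apply T2eq.
  - rewrite !sh_actT hk_hmul. rewrite plus_IZR. ring.
  - rewrite !rh_actT sh_actT fl_subZ frac_plus_frac hk_hmul hb_hmul.
    f_equal. rewrite Rmult_plus_distr_l. rewrite <- Rmult_assoc. rewrite <- pw_add; auto.
    replace (fl (sh p) - (hk h1 + hk h2) + hk h1)%Z with (fl (sh p) - hk h2)%Z by lia.
    replace (fl (sh p) - hk h2 - hk h1)%Z with (fl (sh p) - (hk h1 + hk h2))%Z by lia. ring.
Qed.
Lemma lift_actT n Hn h p J : (fl (sh p) - hk h <= J)%Z ->
  liftT n J (actT n Hn h p) = frac (liftT n (J + hk h) p + pw n J * hb h).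
Proof. intros HJ. unfold liftT. rewrite sh_actT rh_actT fl_subZ frac_plus_frac frac_mulZ.
  2: apply pw_isZ; lia. f_equal. rewrite Rmult_plus_distr_l. rewrite <- Rmult_assoc. rewrite <- pw_add; auto.
  replace (J - (fl (sh p) - hk h) + (fl (sh p) - hk h))%Z with J by lia.
  replace (J - (fl (sh p) - hk h))%Z with (J + hk h - fl (sh p))%Z by lia. auto. Qed.
Lemma actT_le n Hn h p q : dT n Hn (actT n Hn h p) (actT n Hn h q) <= dT n Hn p q.
Proof. pose proof (ust_ge n Hn p q) as [G1 G2].
  eapply Rle_trans. apply (dT_le n Hn _ _ (ust n Hn p q - IZR (hk h))); rewrite ?sh_actT; try lra.
  - unfold merged. rewrite fl_subZ. pose proof (fl_le _ _ G1). pose proof (fl_le _ _ G2).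
    rewrite !lift_actT; try lia. replace (fl (ust n Hn p q) - hk h + hk h)%Z with (fl (ust n Hn p q)) by lia.
    pose proof (T3 n Hn p q) as Hm. unfold merged in Hm. rewrite Hm. auto.
  - rewrite !sh_actT. unfold dT. lra. Qed.

Lemma isom_from_le (G : group) {X : Type} (d : X -> X -> R) (act : G -> X -> X) :
  (forall x, act gone x = x) -> (forall g h x, act (gmul g h) x = act g (act h x)) ->
  (forall g x y, d (act g x) (act g y) <= d x y) -> isometric_action d act.
Proof. intros H1 H2 H3. split; auto. split; auto. intros g x y. apply Rle_antisym; auto.
  assert (E : forall z, act (ginv g) (act g z) = z) by (intro z; rewrite <- H2, gmulVl; apply H1).
  eapply Rle_trans; [|apply (H3 (ginv g))]. rewrite !E. right; reflexivity. Qed.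

Lemma actT_isom n Hn : isometric_action (G := Hgrp n Hn) (dT n Hn) (actT n Hn).
Proof. apply isom_from_le. apply actT_one. apply actT_mul. apply actT_le. Qed.

Lemma leq_coq (a b : nat) : is_true (a <= b)%N -> (a <= b)%coq_nat.
Proof. intros H. exact (elimT leP H). Qed.
Lemma ltn_coq (a b : nat) : (a < b)%coq_nat -> is_true (a < b)%N.
Proof. intros H. exact (introT ltP H). Qed.

Lemma seq_cv_from {X : Type} (d : X -> X -> R) (v : nat -> X) (L : X) (h : nat -> R) (l : R) :
  cvR h l -> (forall k, d (v k) L <= Rabs (h k - l)) -> seq_cv d v L.
Proof. intros Hc Hd eps He. destruct (Hc eps He) as [N HN]. exists N. intros k Hk.
  eapply Rle_lt_trans. apply Hd. apply HN. apply leq_coq; auto. Qed.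

Lemma le_eps x r : (forall eps, 0 < eps -> x <= r + eps) -> x <= r.
Proof. intros H. destruct (Rle_dec x r); auto. pose proof (H ((x - r)/2) ltac:(lra)). lra. Qed.

Lemma closed_ball {X : Type} (d : X -> X -> R) (v : nat -> X) L p r :
  is_metric d -> seq_cv d v L -> (forall k, d p (v k) <= r) -> d p L <= r.
Proof. intros [_ [Hs Ht]] Hc Hb. apply le_eps. intros eps He. destruct (Hc eps He) as [N HN].
  pose proof (HN N (leqnn N)). pose proof (Ht p (v N) L). pose proof (Hb N). lra. Qed.

Lemma zero_proof n : frac (snd (0, 0)) = snd (0, 0) /\ inZn n (snd (0, 0)).
Proof. simpl. split. apply frac_of01; lra. apply inZn_0. Qed.
Lemma zl_proof n (s : R) : frac (snd (s, 0)) = snd (s, 0) /\ inZn n (snd (s, 0)).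
Proof. simpl. split. apply frac_of01; lra. apply inZn_0. Qed.
Definition zl n (s : R) : T2 n := exist _ (s, 0) (zl_proof n s).
Lemma dT_zero n Hn p q : rh p = 0 -> rh q = 0 -> dT n Hn p q <= Rabs (sh p - sh q).
Proof. intros Hp Hq. eapply Rle_trans. apply (dT_le _ _ _ _ (Rmax (sh p) (sh q))). apply Rmax_l. apply Rmax_r.
  unfold merged, liftT. rewrite Hp Hq !Rmult_0_r. auto.
  unfold Rmax. destruct (Rle_dec (sh p) (sh q)). rewrite Rabs_left1; lra. rewrite Rabs_right; lra. Qed.

Definition KT n (p : T2 n) : Prop := 0 <= sh p <= 1 /\ rh p = 0.
Lemma KT_compact n Hn : compact_set (dT n Hn) (KT n).
Proof. intros u Hu. destruct (BW (fun k => sh (u k)) 0 1) as [phi [Hp [l [Hl Hc]]]].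
  { intros k. apply Hu. }
  exists phi. split. intros k. apply ltn_coq, Hp.
  exists (zl n l). split. split; auto.
  apply (seq_cv_from _ _ _ _ _ Hc). intros k. apply dT_zero. apply Hu. reflexivity. Qed.

Lemma dT_unbounded n Hn : unbounded (dT n Hn).
Proof. intros r. exists (zl n 0), (zl n (Rabs r + 1)). eapply Rlt_le_trans. 2: apply dT_ge.
  unfold sh; simpl. rewrite Rabs_left1. pose proof (Rle_abs r). lra. pose proof (Rabs_pos r). lra. Qed.

Lemma KT_cover n Hn (q : T2 n) : exists h y, KT n y /\ actT n Hn h y = q.
Proof.
  pose (s0 := sh q - IZR (fl (sh q))).
  assert (Hs0 : 0 <= s0 < 1) by (unfold s0; pose proof (fl_spec (sh q)); lra).
  assert (Hb : inZn n (pw n (- fl (sh q)) * rh q)) by (apply inZn_mulpw; auto; apply rh_inZn).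
  exists (mkH n (- fl (sh q))%Z _ Hb), (zl n s0). split. split. unfold sh; simpl; lra. reflexivity.
  apply T2eq.
  - rewrite sh_actT. unfold sh at 1; simpl. unfold hk; simpl. rewrite opp_IZR. unfold s0. ring.
  - rewrite rh_actT. unfold hk, hb, sh, rh at 1; simpl. fold (sh q).
    rewrite (fl_unique 0 s0); [|simpl; lra]. rewrite Rplus_0_l. rewrite <- Rmult_assoc, <- pw_add; auto.
    replace (0 - - fl (sh q) + - fl (sh q))%Z with 0%Z by lia. rewrite pw_0 Rmult_1_l. apply rh_frac.
Qed.

Lemma choice_nat2 (Q : nat -> nat -> Prop) : (forall k, exists m, Q k m) -> exists g, forall k, Q k (g k).
Proof. apply choice_nat. Qed.

Lemma dT_proper n Hn : proper_space (dT n Hn).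
Proof.
  intros p r u Hu.
  set (Jt := fl (sh p + r)). set (jb := fl (sh p - r)).
  assert (Hsh : forall k, sh p - r <= sh (u k) <= sh p + r).
  { intros k. pose proof (dT_ge n Hn p (u k)). pose proof (Hu k). 
    revert H; unfold Rabs; destruct Rcase_abs; intros; lra. }
  assert (Hmg : forall k, merged n Jt p (u k)).
  { intros k. pose proof (Hu k). destruct (ust_ge n Hn p (u k)). unfold dT in H.
    apply (merged_up n (fl (ust n Hn p (u k)))); [exact Hn | | apply T3]. unfold Jt. apply fl_le. lra. }
  assert (Hfl : forall k, (jb <= fl (sh (u k)) <= Jt)%Z).
  { intros k. destruct (Hsh k). split; apply fl_le; lra. }
  set (I := Z.to_nat (Jt - jb)).
  destruct (pigeon (S I) (fun k => Z.to_nat (Jt - fl (sh (u k))))) as [phi1 [Hp1 [i Hi]]].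
  { intros k. pose proof (Hfl k). unfold I. lia. }
  set (P := liftT n Jt p).
  assert (HP : 0 <= P < 1) by apply frac_bounds.
  assert (Hm : forall k, exists m : nat, (m < Nat.pow n i)%coq_nat /\
            pw n (Z.of_nat i) * rh (u (phi1 k)) = P + INR m).
  { intros k. pose proof (Hmg (phi1 k)) as Hk. unfold merged in Hk. fold P in Hk.
    pose proof (Hi k) as Hik. pose proof (Hfl (phi1 k)).
    assert (E : (Jt - fl (sh (u (phi1 k))))%Z = Z.of_nat i) by lia.
    unfold liftT in Hk. rewrite E in Hk.
    assert (HPf : frac P = P) by (unfold P, liftT; apply frac_frac).
    rewrite <- HPf in Hk. apply frac_eq_iff in Hk. destruct Hk as [z0 Hz0].
    assert (Hz : pw n (Z.of_nat i) * rh (u (phi1 k)) - P = IZR (- z0)) by (rewrite opp_IZR; lra).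
    set (z := (- z0)%Z) in *. clearbody z. clear Hz0.
    pose proof (rh_frac (u (phi1 k))) as Hr. pose proof (frac_bounds (rh (u (phi1 k)))). rewrite Hr in H0.
    pose proof (pw_pos n (Z.of_nat i) Hn).
    assert (Hz1 : (0 <= z)%Z). { apply le_IZR. apply Rnot_lt_le. intros Hc.
      apply lt_IZR in Hc. assert (IZR z <= -1) by (apply IZR_le; lia). nra. }
    exists (Z.to_nat z). split.
    - apply INR_lt. rewrite pow_INR. rewrite <- pw_nat. rewrite INR_IZR_INZ Z2Nat.id; auto. nra.
    - rewrite INR_IZR_INZ Z2Nat.id; auto. lra. }
  destruct (choice_nat2 _ Hm) as [mf Hmf].
  destruct (pigeon (Nat.pow n i) mf) as [phi2 [Hp2 [m Hmv]]].
  { intros k. apply Hmf. }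
  set (w := fun k => u (phi1 (phi2 k))).
  assert (Hwfl : forall k, fl (sh (w k)) = (Jt - Z.of_nat i)%Z).
  { intros k. pose proof (Hi (phi2 k)). pose proof (Hfl (phi1 (phi2 k))). unfold w. lia. }
  assert (Hwr : forall k, rh (w k) = rh (w 0%nat)).
  { intros k. pose proof (Hmf (phi2 k)) as [_ E1]. pose proof (Hmf (phi2 0%nat)) as [_ E2].
    rewrite (Hmv k) in E1. rewrite (Hmv 0%nat) in E2. pose proof (pw_pos n (Z.of_nat i) Hn). unfold w; cbv beta.
    apply (Rmult_eq_reg_l (pw n (Z.of_nat i))); lra. }
  destruct (BW (fun k => sh (w k)) (IZR (Jt - Z.of_nat i)) (IZR (Jt - Z.of_nat i) + 1)) as [phi3 [Hp3 [l [Hl Hc]]]].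
  { intros k. pose proof (fl_spec (sh (w k))). rewrite Hwfl in H. lra. }
  set (Lp := upT n Hn (w 0%nat) l).
  assert (Hd : forall k, dT n Hn (w (phi3 k)) Lp <= Rabs (sh (w (phi3 k)) - l)).
  { intros k. eapply Rle_trans. apply (dT_le _ _ _ _ (Rmax (sh (w (phi3 k))) l)).
    apply Rmax_l. unfold Lp; rewrite sh_up; apply Rmax_r.
    - unfold merged. unfold Lp. rewrite liftT_of_up. 2: apply fl_le, Rmax_r.
      unfold liftT. rewrite Hwr. rewrite !Hwfl. auto.
    - unfold Lp. rewrite sh_up. unfold Rmax. destruct (Rle_dec _ _).
      rewrite Rabs_left1; lra. rewrite Rabs_right; lra. }
  assert (Hcv : seq_cv (dT n Hn) (fun k => u (phi1 (phi2 (phi3 k)))) Lp).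
  { apply (seq_cv_from _ _ _ _ _ Hc). exact Hd. }
  exists (fun k => phi1 (phi2 (phi3 k))). split.
  { intros k. apply ltn_coq. assert (Hinc : incr (fun k => phi1 (phi2 (phi3 k)))).
    { apply (incr_comp phi1 (fun k => phi2 (phi3 k))); auto. apply incr_comp; auto. } apply Hinc. }
  exists Lp. split; auto.
  apply (closed_ball _ _ _ _ _ (dT_metric n Hn) Hcv). intros k. apply Hu.
Qed.

Lemma exp_le x y : x <= y -> exp x <= exp y.
Proof. intros [H|H]. left; apply exp_increasing; auto. subst; lra. Qed.
Lemma ln_le' x y : 0 < x -> x <= y -> ln x <= ln y.
Proof. intros H [H1|H1]. left; apply ln_increasing; auto. subst; lra. Qed.
Lemma Rabs_sum_ge u a b : Rabs (a - b) <= Rabs (u - a) + Rabs (u - b).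
Proof. unfold Rabs; repeat destruct Rcase_abs; lra. Qed.

Definition P2 := (R * R)%type.
Definition Dp (p q : P2) : R := Rabs (fst p - fst q).
Definition cst (p q : P2) (u : R) : R := Rabs (u - snd p) + Rabs (u - snd q) + 2 * Dp p q * exp (- u).
Definition ustP (p q : P2) : R :=
  match Rlt_dec 0 (Dp p q) with left _ => Rmax (Rmax (snd p) (snd q)) (ln (Dp p q)) | right _ => Rmax (snd p) (snd q) end.
Definition dP (p q : P2) : R := cst p q (ustP p q).

Lemma Dp_ge0 p q : 0 <= Dp p q. Proof. apply Rabs_pos. Qed.
Lemma Dp_sym p q : Dp p q = Dp q p. Proof. unfold Dp. apply Rabs_minus_sym. Qed.

Lemma ustP_ge p q : snd p <= ustP p q /\ snd q <= ustP p q.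
Proof. unfold ustP. pose proof (Rmax_l (snd p) (snd q)). pose proof (Rmax_r (snd p) (snd q)).
  destruct (Rlt_dec 0 (Dp p q)). pose proof (Rmax_l (Rmax (snd p) (snd q)) (ln (Dp p q))). split; lra. split; lra. Qed.

Lemma ustP_D p q : Dp p q <= exp (ustP p q).
Proof. unfold ustP. destruct (Rlt_dec 0 (Dp p q)).
  - rewrite <- (exp_ln (Dp p q)) at 1; auto. apply exp_le. apply Rmax_r.
  - pose proof (Dp_ge0 p q). pose proof (exp_pos (Rmax (snd p) (snd q))). lra. Qed.

Lemma dP_eq p q : dP p q = 2 * ustP p q - snd p - snd q + 2 * Dp p q * exp (- ustP p q).
Proof. unfold dP, cst. destruct (ustP_ge p q). rewrite !Rabs_right; lra. Qed.

Lemma Dexp_le1 p q : Dp p q * exp (- ustP p q) <= 1.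
Proof. pose proof (ustP_D p q). rewrite exp_Ropp. pose proof (exp_pos (ustP p q)).
  apply (Rmult_le_reg_r (exp (ustP p q))); auto. rewrite Rmult_assoc Rinv_l; lra. Qed.

Lemma exp_ge1 y : 1 + y <= exp y. Proof. apply exp_ineq1_le. Qed.

Lemma dP_min p q u : dP p q <= cst p q u.
Proof.
  set (m := Rmax (snd p) (snd q)). set (D := Dp p q).
  assert (Hm1 : snd p <= m) by apply Rmax_l. assert (Hm2 : snd q <= m) by apply Rmax_r.
  assert (Hm3 : m = snd p \/ m = snd q) by (unfold m, Rmax; destruct Rle_dec; auto).
  assert (HD : 0 <= D) by apply Dp_ge0.
  assert (Hphi : forall w, m <= w -> 2 * ustP p q + 2 * D * exp (- ustP p q) <= 2 * w + 2 * D * exp (- w)).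
  { intros w Hw. unfold ustP. fold D m. destruct (Rlt_dec 0 D) as [HD0|HD0].
    - destruct (Rle_dec m (ln D)) as [Hl|Hl].
      + rewrite Rmax_right; auto. rewrite exp_Ropp exp_ln; auto.
        replace (2 * D * / D) with 2 by (field; lra).
        pose proof (exp_ge1 (ln D - w)). unfold Rminus in H. rewrite exp_plus exp_ln in H; auto.
        unfold Rminus in H. nra.
      + rewrite Rmax_left; [|lra].
        assert (HA : D * exp (- m) < 1).
        { assert (D < exp m). { rewrite <- (exp_ln D); auto. apply exp_increasing. lra. }
          rewrite exp_Ropp. pose proof (exp_pos m). apply (Rmult_lt_reg_r (exp m)); auto.
          rewrite Rmult_assoc Rinv_l; lra. }
        pose proof (exp_ge1 (- (w - m))). replace (- w) with (- m + - (w - m)) by ring.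
        rewrite exp_plus. pose proof (exp_pos (- m)). pose proof (exp_pos (- (w - m))).
        assert (0 <= D * exp (- m)) by nra. nra.
    - assert (D = 0) by lra. rewrite H. lra. }
  rewrite (dP_eq p q). unfold cst. fold D.
  destruct (Rle_dec m u) as [Hu|Hu].
  - rewrite !Rabs_right; try lra. pose proof (Hphi u Hu). lra.
  - pose proof (Hphi m (Rle_refl m)). pose proof (Rabs_sum_ge u (snd p) (snd q)).
    assert (Rabs (snd p - snd q) = 2 * m - snd p - snd q).
    { destruct Hm3 as [E|E]; rewrite <- E; unfold Rabs; destruct Rcase_abs; lra. }
    assert (exp (- m) <= exp (- u)) by (apply exp_le; lra).
    assert (D * exp (- m) <= D * exp (- u)) by nra. lra.
Qed.

Lemma cst_tri p q r u1 u2 : cst p r (Rmax u1 u2) <= cst p q u1 + cst q r u2.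
Proof.
  unfold cst, Dp.
  pose proof (Rabs_triang (fst p - fst q) (fst q - fst r)).
  replace (fst p - fst q + (fst q - fst r)) with (fst p - fst r) in H by ring.
  pose proof (Rabs_pos (fst p - fst q)). pose proof (Rabs_pos (fst q - fst r)).
  pose proof (exp_pos (- u1)). pose proof (exp_pos (- u2)).
  unfold Rmax. destruct (Rle_dec u1 u2).
  - assert (exp (- u2) <= exp (- u1)) by (apply exp_le; lra).
    assert (Rabs (fst p - fst r) * exp (- u2) <= Rabs (fst p - fst q) * exp (- u1) + Rabs (fst q - fst r) * exp (- u2)) by nra.
    assert (Rabs (u2 - snd p) <= Rabs (u1 - snd p) + (u2 - u1)) by (unfold Rabs; repeat destruct Rcase_abs; lra).
    assert (u2 - u1 <= Rabs (u1 - snd q) + Rabs (u2 - snd q)) by (unfold Rabs; repeat destruct Rcase_abs; lra).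
    lra.
  - assert (exp (- u1) <= exp (- u2)) by (apply exp_le; lra).
    assert (Rabs (fst p - fst r) * exp (- u1) <= Rabs (fst p - fst q) * exp (- u1) + Rabs (fst q - fst r) * exp (- u2)) by nra.
    assert (Rabs (u1 - snd r) <= Rabs (u2 - snd r) + (u1 - u2)) by (unfold Rabs; repeat destruct Rcase_abs; lra).
    assert (u1 - u2 <= Rabs (u1 - snd q) + Rabs (u2 - snd q)) by (unfold Rabs; repeat destruct Rcase_abs; lra).
    lra.
Qed.

Lemma dP_ge p q : Rabs (snd p - snd q) + 2 * Dp p q * exp (- ustP p q) <= dP p q.
Proof. unfold dP, cst. pose proof (Rabs_sum_ge (ustP p q) (snd p) (snd q)). lra. Qed.

Lemma dP_metric : is_metric dP.
Proof. split; [|split].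
  - intros p q. split.
    + intros H. pose proof (dP_ge p q). pose proof (Rabs_pos (snd p - snd q)).
      pose proof (exp_pos (- ustP p q)). pose proof (Dp_ge0 p q).
      assert (Dp p q * exp (- ustP p q) = 0) by nra.
      assert (Dp p q = 0). { apply Rmult_integral in H4. destruct H4; auto. lra. }
      assert (Rabs (snd p - snd q) = 0) by nra.
      unfold Dp in H5. destruct p as [a b], q as [c e]. simpl in *.
      revert H5 H6. unfold Rabs; repeat destruct Rcase_abs; intros; f_equal; lra.
    + intros ->. pose proof (dP_min q q (snd q)). unfold cst, Dp in H. rewrite !Rminus_diag Rabs_R0 in H.
      pose proof (dP_ge q q). pose proof (Rabs_pos (snd q - snd q)). pose proof (exp_pos (- ustP q q)).
      pose proof (Dp_ge0 q q). assert (0 <= Dp q q * exp (- ustP q q)) by nra. lra.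
  - intros p q. apply Rle_antisym.
    + eapply Rle_trans. apply (dP_min p q (ustP q p)). unfold dP, cst. rewrite Dp_sym. lra.
    + eapply Rle_trans. apply (dP_min q p (ustP p q)). unfold dP, cst. rewrite Dp_sym. lra.
  - intros p q r. eapply Rle_trans. apply (dP_min p r (Rmax (ustP p q) (ustP q r))). apply cst_tri.
Qed.

Lemma ustP_sym p q : ustP p q = ustP q p.
Proof. unfold ustP. rewrite Dp_sym. rewrite (Rmax_comm (snd p)). auto. Qed.

Lemma ustP_quasi p q r : ustP p r <= Rmax (ustP p q) (ustP q r) + ln 2.
Proof.
  set (M := Rmax (ustP p q) (ustP q r)).
  assert (H1 : ustP p q <= M) by apply Rmax_l. assert (H2 : ustP q r <= M) by apply Rmax_r.
  destruct (ustP_ge p q). destruct (ustP_ge q r).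
  assert (Hl2 : 0 < ln 2) by (rewrite <- ln_1; apply ln_increasing; lra).
  unfold ustP at 1. destruct (Rlt_dec 0 (Dp p r)).
  - apply Rmax_lub. apply Rmax_lub; lra.
    assert (Dp p r <= 2 * exp M).
    { pose proof (ustP_D p q). pose proof (ustP_D q r). unfold Dp in *.
      pose proof (Rabs_triang (fst p - fst q) (fst q - fst r)).
      replace (fst p - fst q + (fst q - fst r)) with (fst p - fst r) in H7 by ring.
      pose proof (exp_le _ _ H1). pose proof (exp_le _ _ H2). lra. }
    eapply Rle_trans. apply ln_le'; eauto. rewrite ln_mult; [|lra|apply exp_pos]. rewrite ln_exp. lra.
  - apply Rmax_lub; lra.
Qed.

Lemma dP_hyp : gromov_hyperbolic dP.
Proof. apply (hyp_from_U dP ustP snd (ln 2)).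
  - left. rewrite <- ln_1; apply ln_increasing; lra.
  - apply ustP_sym.
  - apply ustP_quasi.
  - intros x y. rewrite dP_eq. pose proof (Dexp_le1 x y). pose proof (exp_pos (- ustP x y)).
    pose proof (Dp_ge0 x y). assert (0 <= Dp x y * exp (- ustP x y)) by nra. lra.
Qed.

Ltac clean := repeat rewrite Rminus_diag; repeat rewrite Rabs_R0; repeat rewrite Rmult_0_r; repeat rewrite Rmult_0_l.

Lemma div_nonneg a b : 0 <= a -> 0 < b -> 0 <= a / b.
Proof. intros. unfold Rdiv. apply Rmult_le_pos; auto. left; apply Rinv_0_lt_compat; auto. Qed.

Lemma dP_cst_le a b u : dP a b <= cst a b u. Proof. apply dP_min. Qed.

Lemma Rabs_mul_pos c t : 0 <= t -> Rabs (c * t) = Rabs c * t.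
Proof. intros H. rewrite Rabs_mult. rewrite (Rabs_pos_eq t); auto. Qed.

Lemma dP_geod : geodesic_space dP.
Proof.
  apply geod_from_ub. apply dP_metric. intros [xp sp] [xq sq].
  set (p := (xp, sp)). set (q := (xq, sq)).
  set (u := ustP p q). set (D := Dp p q). set (e := exp (- u)).
  set (L1 := u - sp). set (L2 := 2 * D * e). set (d := dP p q).
  assert (Hd : d = L1 + L2 + (u - sq)) by (unfold d, L1, L2; rewrite dP_eq; simpl; fold u D e; ring).
  destruct (ustP_ge p q) as [G1 G2]. simpl in G1, G2. fold u in G1, G2.
  assert (He : 0 < e) by apply exp_pos. assert (HD : 0 <= D) by apply Dp_ge0.
  assert (HDe : D = Rabs (xp - xq)) by reflexivity.
  assert (HeD : exp (- u) = e) by reflexivity.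
  assert (HL1 : L1 = u - sp) by reflexivity. assert (HL2d : L2 = 2 * D * e) by reflexivity.
  clearbody u D e d L1 L2.
  assert (HL2 : 0 <= L2) by (rewrite HL2d; nra).
  set (gam := fun t => match Rle_dec t L1 with
     | left _ => (xp, sp + t)
     | right _ => match Rle_dec t (L1 + L2) with
        | left _ => (xp + (xq - xp) * ((t - L1) / L2), u)
        | right _ => (xq, sq + d - t) end end).
  assert (Hub : forall a b, 0 <= a -> a <= b -> b <= d -> dP (gam a) (gam b) <= b - a).
  { intros a b Ha Hab Hb. unfold gam. clear gam.
    destruct (Rle_dec a L1) as [A1|A1]; [|destruct (Rle_dec a (L1 + L2)) as [A2|A2]];
    (destruct (Rle_dec b L1) as [B1|B1]; [|destruct (Rle_dec b (L1 + L2)) as [B2|B2]]);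
    repeat match goal with H : ~ _ <= _ |- _ => apply Rnot_le_lt in H end;
    try (exfalso; lra).
    - eapply Rle_trans; [apply (dP_cst_le _ _ (sp + b))|]; unfold cst, Dp; simpl. clean.
      rewrite Rabs_right; lra.
    - eapply Rle_trans; [apply (dP_cst_le _ _ (u))|]; unfold cst, Dp; simpl. replace (xp - (xp + (xq - xp) * ((b - L1) / L2))) with ((xp - xq) * ((b - L1) / L2)) by ring.
      assert (0 < L2) by lra. rewrite Rabs_mul_pos. 2: apply div_nonneg; lra.
      rewrite <- HDe. clean. rewrite !Rabs_right; try lra.
      right. rewrite HeD HL2d HL1. field. nra.
    - eapply Rle_trans; [apply (dP_cst_le _ _ (u))|]; unfold cst, Dp; simpl. rewrite <- HDe; rewrite HeD. rewrite (Rabs_right (u - (sp + a))); [|lra]. rewrite (Rabs_right (u - (sq + d - b))); [|lra]. lra.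
    - eapply Rle_trans; [apply (dP_cst_le _ _ (u))|]; unfold cst, Dp; simpl. replace (xp + (xq - xp) * ((a - L1) / L2) - (xp + (xq - xp) * ((b - L1) / L2))) with ((xp - xq) * ((b - a) / L2)) by (field; lra).
      assert (0 < L2) by lra. rewrite Rabs_mul_pos. 2: apply div_nonneg; lra.
      rewrite <- HDe. clean. right. rewrite HeD HL2d. field. nra.
    - eapply Rle_trans; [apply (dP_cst_le _ _ (u))|]; unfold cst, Dp; simpl. replace (xp + (xq - xp) * ((a - L1) / L2) - xq) with ((xp - xq) * (1 - (a - L1) / L2)) by (field; lra).
      assert (0 < L2) by lra. rewrite Rabs_mul_pos.
      2: { assert ((a - L1) / L2 <= 1). { apply (Rmult_le_reg_r L2); auto. unfold Rdiv. rewrite Rmult_assoc Rinv_l; lra. } lra. }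
      rewrite <- HDe. clean. rewrite (Rabs_right (u - (sq + d - b))); [|lra].
      right. rewrite HeD HL2d HL1. rewrite HL2d HL1 in Hd. field_simplify; [|nra]. nra.
    - eapply Rle_trans; [apply (dP_cst_le _ _ (sq + d - a))|]; unfold cst, Dp; simpl. clean.
      rewrite Rabs_right; lra. }
  exists gam. split; [|split].
  - unfold gam, p. destruct (Rle_dec 0 L1); [|lra]. f_equal; ring.
  - unfold gam, q. destruct (Rle_dec d L1) as [H1|H1].
    + assert (L2 = 0) by lra. assert (D = 0). { rewrite HL2d in H. nra. }
      rewrite HDe in H0. f_equal. revert H0; unfold Rabs; destruct Rcase_abs; intros; lra. lra.
    + destruct (Rle_dec d (L1 + L2)).
      * apply Rnot_le_lt in H1. f_equal. replace (d - L1) with L2 by lra. replace (L2 / L2) with 1 by (field; lra). ring. lra.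
      * f_equal. ring.
  - intros a b Ha Hb. destruct (Rle_dec a b).
    + rewrite Rabs_left1; [|lra]. pose proof (Hub a b ltac:(lra) r ltac:(lra)). lra.
    + rewrite Rabs_right; [|lra]. destruct dP_metric as [_ [Hs _]]. rewrite Hs.
      apply Hub; lra.
Qed.

Lemma cv_comb (a b : nat -> R) la lb C : cvR a la -> cvR b lb -> 0 <= C ->
  forall eps, 0 < eps -> exists N, forall k, (N <= k)%coq_nat -> Rabs (a k - la) + C * Rabs (b k - lb) < eps.
Proof. intros Ha Hb HC eps He. destruct (Ha (eps / 2) ltac:(lra)) as [N1 H1].
  assert (He2 : 0 < eps / (2 * (C + 1))). { apply Rdiv_lt_0_compat; lra. }
  destruct (Hb _ He2) as [N2 H2]. exists (Nat.max N1 N2). intros k Hk.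
  pose proof (H1 k ltac:(lia)). pose proof (H2 k ltac:(lia)).
  assert (C * Rabs (b k - lb) <= C * (eps / (2 * (C + 1)))) by (apply Rmult_le_compat_l; lra).
  assert (C * (eps / (2 * (C + 1))) <= eps / 2).
  { unfold Rdiv. rewrite Rinv_mult. 
    assert (0 < / (C + 1)) by (apply Rinv_0_lt_compat; lra).
    assert (C * / (C + 1) <= 1). { apply (Rmult_le_reg_r (C + 1)); [lra|]. rewrite Rmult_assoc Rinv_l; lra. }
    nra. }
  lra. Qed.

Lemma box_seq (u : nat -> P2) a1 b1 a2 b2 :
  (forall k, a1 <= fst (u k) <= b1 /\ a2 <= snd (u k) <= b2) ->
  exists phi, incr phi /\ exists L, (a1 <= fst L <= b1 /\ a2 <= snd L <= b2) /\ seq_cv dP (fun k => u (phi k)) L.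
Proof.
  intros Hu. destruct (BW (fun k => fst (u k)) a1 b1) as [phi1 [Hp1 [l1 [Hl1 Hc1]]]]. { intros k; apply Hu. }
  destruct (BW (fun k => snd (u (phi1 k))) a2 b2) as [phi2 [Hp2 [l2 [Hl2 Hc2]]]]. { intros k; apply Hu. }
  exists (fun k => phi1 (phi2 k)). split. apply incr_comp; auto.
  exists (l1, l2). split. simpl; auto.
  pose proof (cvR_sub _ _ _ Hp2 Hc1) as Hc1'. simpl in Hc1'.
  intros eps He. destruct (cv_comb _ _ _ _ (2 * exp (- l2)) Hc2 Hc1' ltac:(pose proof (exp_pos (- l2)); lra) eps He) as [N HN].
  exists N. intros k Hk. eapply Rle_lt_trans; [apply (dP_cst_le _ _ l2)|]. unfold cst, Dp. simpl.
  rewrite Rminus_diag Rabs_R0. pose proof (HN k (leq_coq _ _ Hk)). rewrite Rabs_minus_sym. lra.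
Qed.

Lemma dP_proper : proper_space dP.
Proof.
  intros p r u Hu.
  set (B := r * exp (snd p + r) / 2).
  assert (Hb : forall k, fst p - B <= fst (u k) <= fst p + B /\ snd p - r <= snd (u k) <= snd p + r).
  { intros k. pose proof (Hu k) as H. rewrite dP_eq in H. destruct (ustP_ge p (u k)) as [G1 G2].
    pose proof (exp_pos (- ustP p (u k))). pose proof (Dp_ge0 p (u k)).
    assert (0 <= Dp p (u k) * exp (- ustP p (u k))) by nra.
    assert (Hus : ustP p (u k) <= snd p + r) by lra.
    assert (HD : 2 * Dp p (u k) <= r * exp (ustP p (u k))).
    { assert (E : exp (- ustP p (u k)) * exp (ustP p (u k)) = 1) by (rewrite <- exp_plus; replace (- ustP p (u k) + ustP p (u k)) with 0 by ring; apply exp_0).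
      pose proof (exp_pos (ustP p (u k))). assert (2 * Dp p (u k) * exp (- ustP p (u k)) <= r) by lra.
      assert (2 * Dp p (u k) * exp (- ustP p (u k)) * exp (ustP p (u k)) <= r * exp (ustP p (u k))) by (apply Rmult_le_compat_r; lra).
      replace (2 * Dp p (u k) * exp (- ustP p (u k)) * exp (ustP p (u k))) with (2 * Dp p (u k) * (exp (- ustP p (u k)) * exp (ustP p (u k)))) in H5 by ring.
      rewrite E in H5. lra. }
    assert (0 <= r) by lra.
    assert (exp (ustP p (u k)) <= exp (snd p + r)) by (apply exp_le; lra).
    assert (Dp p (u k) <= B) by (unfold B; nra).
    unfold Dp in H4. unfold Dp in *. split; revert H5; unfold Rabs; destruct Rcase_abs; intros; lra. }
  destruct (box_seq u (fst p - B) (fst p + B) (snd p - r) (snd p + r) Hb) as [phi [Hp [L [HL Hc]]]].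
  exists phi. split. intros k. apply ltn_coq, Hp.
  exists L. split; auto. apply (closed_ball _ _ _ _ _ dP_metric Hc). intros k. apply Hu.
Qed.

Lemma dP_unbounded : unbounded dP.
Proof. intros r. exists (0, 0), (0, Rabs r + 1). eapply Rlt_le_trans. 2: apply dP_ge.
  simpl. pose proof (exp_pos (- ustP (0, 0) (0, Rabs r + 1))). pose proof (Dp_ge0 (0,0) (0, Rabs r + 1)).
  assert (0 <= Dp (0, 0) (0, Rabs r + 1) * exp (- ustP (0, 0) (0, Rabs r + 1))) by nra.
  rewrite Rabs_left1. pose proof (Rle_abs r). lra. pose proof (Rabs_pos r). lra. Qed.

Definition actP n (Hn : (1 <= n)%coq_nat) (h : Hc n) (p : P2) : P2 :=
  (pw n (hk h) * fst p + hb h, snd p + ln (pw n (hk h))).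

Lemma actP_one n Hn p : actP n Hn (hone n) p = p.
Proof. unfold actP. rewrite hk_hone hb_hone pw_0 ln_1. destruct p; simpl; f_equal; ring. Qed.
Lemma actP_mul n Hn h1 h2 p : actP n Hn (hmul n Hn h1 h2) p = actP n Hn h1 (actP n Hn h2 p).
Proof. unfold actP. rewrite hk_hmul hb_hmul pw_add; auto. simpl. f_equal. ring.
  rewrite ln_mult; try apply pw_pos; auto. ring. Qed.
Lemma actP_le n Hn h p q : dP (actP n Hn h p) (actP n Hn h q) <= dP p q.
Proof. set (lam := pw n (hk h)). assert (Hl : 0 < lam) by (apply pw_pos; auto).
  eapply Rle_trans. apply (dP_cst_le _ _ (ustP p q + ln lam)).
  unfold dP, cst, Dp, actP. fold lam. simpl.
  replace (ustP p q + ln lam - (snd p + ln lam)) with (ustP p q - snd p) by ring.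
  replace (ustP p q + ln lam - (snd q + ln lam)) with (ustP p q - snd q) by ring.
  replace (lam * fst p + hb h - (lam * fst q + hb h)) with (lam * (fst p - fst q)) by ring.
  rewrite Rabs_mult (Rabs_pos_eq lam); [|lra].
  rewrite Ropp_plus_distr exp_plus (exp_Ropp (ln lam)) (exp_ln lam); auto.
  right. field. lra. Qed.
Lemma actP_isom n Hn : isometric_action (G := Hgrp n Hn) dP (actP n Hn).
Proof. apply isom_from_le. apply actP_one. apply actP_mul. apply actP_le. Qed.

Lemma ln_pw n k : (1 <= n)%coq_nat -> ln (pw n k) = IZR k * ln (INR n).
Proof. intros Hn. pose proof (INRn_pos n Hn). unfold pw. destruct k as [|p|p]; simpl.
  - rewrite ln_1. ring.
  - rewrite ln_pow; auto. rewrite INR_IZR_INZ positive_nat_Z. auto.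
  - rewrite ln_Rinv. rewrite ln_pow; auto. rewrite <- Pos2Z.opp_pos. rewrite opp_IZR INR_IZR_INZ positive_nat_Z. ring.
    apply pow_lt; auto. Qed.

Definition KP (n : nat) (p : P2) : Prop := 0 <= fst p <= 1 /\ 0 <= snd p <= ln (INR n).
Lemma KP_compact n : compact_set dP (KP n).
Proof. intros u Hu. destruct (box_seq u 0 1 0 (ln (INR n))) as [phi [Hp [L [HL Hc]]]].
  { intros k. apply Hu. }
  exists phi. split. intros k. apply ltn_coq, Hp. exists L. split; auto. Qed.

Lemma KP_cover n Hn (Hn2 : (2 <= n)%coq_nat) (q : P2) : exists h y, KP n y /\ actP n Hn h y = q.
Proof.
  assert (Hln : 0 < ln (INR n)). { rewrite <- ln_1. apply ln_increasing. lra. apply (lt_INR 1); lia. }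
  destruct q as [x s].
  set (k := fl (s / ln (INR n))). set (lam := pw n k).
  assert (Hl : 0 < lam) by (apply pw_pos; auto).
  set (m := fl (x / lam)).
  assert (Hb : inZn n (pw n k * IZR m)) by (apply inZn_mulpw; auto; apply inZn_IZR).
  exists (mkH n k _ Hb), (x / lam - IZR m, s - IZR k * ln (INR n)). split.
  - unfold KP; simpl. pose proof (fl_spec (x / lam)). fold m in H.
    pose proof (fl_spec (s / ln (INR n))). fold k in H0.
    assert (Es : s / ln (INR n) * ln (INR n) = s) by (field; lra).
    assert (IZR k * ln (INR n) <= s / ln (INR n) * ln (INR n)) by (apply Rmult_le_compat_r; lra).
    assert (s / ln (INR n) * ln (INR n) < (IZR k + 1) * ln (INR n)) by (apply Rmult_lt_compat_r; lra).
    split; lra.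
  - unfold actP. rewrite hk_mkH hb_mkH. fold lam. simpl. unfold lam. rewrite ln_pw; auto. fold lam.
    f_equal. field. lra. ring.
Qed.

(* n = 1 : shift action on the line T2 1 *)
Lemma rh_T21 (p : T2 1) : rh p = 0.
Proof. pose proof (rh_frac p). destruct (rh_inZn p) as [e [He Hz]]. rewrite pw_one Rmult_1_r in Hz.
  rewrite frac_isZ in H; auto. Qed.
Lemma one_le1 : (1 <= 1)%coq_nat. Proof. lia. Qed.
Lemma dT1_eq (p q : T2 1) : dT 1 one_le1 p q = Rabs (sh p - sh q).
Proof. apply Rle_antisym. apply dT_zero; apply rh_T21. apply dT_ge. Qed.

Definition actS (h : Hc 1) (p : T2 1) : T2 1 := exist _ (sh p + hb h, rh p) (proj2_sig p).
Lemma sh_actS h p : sh (actS h p) = sh p + hb h. Proof. reflexivity. Qed.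
Lemma rh_actS h p : rh (actS h p) = rh p. Proof. reflexivity. Qed.
Lemma actS_one p : actS (hone 1) p = p.
Proof. apply T2eq. rewrite sh_actS hb_hone. ring. apply rh_actS. Qed.
Lemma actS_mul h1 h2 p : actS (hmul 1 one_le1 h1 h2) p = actS h1 (actS h2 p).
Proof. apply T2eq. rewrite !sh_actS hb_hmul pw_one. ring. rewrite !rh_actS. auto. Qed.
Lemma actS_isom : isometric_action (G := Hgrp 1 one_le1) (dT 1 one_le1) actS.
Proof. apply isom_from_le. apply actS_one. apply actS_mul.
  intros g x y. rewrite !dT1_eq !sh_actS.
  right. f_equal. ring. Qed.
Lemma KS_cover (q : T2 1) : exists h y, KT 1 y /\ actS h y = q.
Proof. set (s := sh q). exists (mkH 1 0 _ (inZn_IZR 1 (fl s))), (zl 1 (s - IZR (fl s))). split.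
  - split. unfold sh; simpl. pose proof (fl_spec s). lra. reflexivity.
  - apply T2eq. rewrite sh_actS hb_mkH. unfold sh at 1; simpl. fold s. ring.
    rewrite rh_actS !rh_T21. auto. Qed.

Ltac ra := repeat rewrite -gmulA.

Lemma inv_unique (G : group) (x y : G) : gmul x y = gone -> x = ginv y.
Proof. intros H. rewrite -(gmul1r x). rewrite -(gmulVr y). rewrite gmulA H gmul1l. auto. Qed.
Lemma ginv_ginv (G : group) (x : G) : ginv (ginv x) = x.
Proof. symmetry. apply inv_unique. apply gmulVr. Qed.
Lemma ginv_mul (G : group) (x y : G) : ginv (gmul x y) = gmul (ginv y) (ginv x).
Proof. symmetry. apply inv_unique. ra. rewrite (gmulA (ginv x) x y) gmulVl gmul1l gmulVl. auto. Qed.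
Lemma ginv_one (G : group) : ginv (@gone G) = gone.
Proof. symmetry. apply inv_unique. apply gmul1l. Qed.
Lemma cancel_l (G : group) (x y : G) : gmul x (gmul (ginv x) y) = y.
Proof. rewrite gmulA gmulVr gmul1l. auto. Qed.
Lemma cancel_l' (G : group) (x y : G) : gmul (ginv x) (gmul x y) = y.
Proof. rewrite gmulA gmulVl gmul1l. auto. Qed.
Lemma mul_left_inj (G : group) (z x y : G) : gmul z x = gmul z y -> x = y.
Proof. intros H. rewrite -(cancel_l' G z x) H cancel_l'. auto. Qed.

Lemma gpow_add (G : group) (x : G) m p : gpow x (m + p) = gmul (gpow x m) (gpow x p).
Proof. induction m; simpl. rewrite gmul1l; auto. rewrite IHm. ra. auto. Qed.
Lemma gpow_succ_r (G : group) (x : G) m : gpow x (S m) = gmul (gpow x m) x.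
Proof. replace (S m) with (m + 1)%nat by lia. rewrite gpow_add. simpl. rewrite gmul1r. auto. Qed.
Lemma gpow_inv (G : group) (x : G) m : gpow (ginv x) m = ginv (gpow x m).
Proof. induction m; simpl. rewrite ginv_one; auto. rewrite ginv_mul -IHm. 
  rewrite -gpow_succ_r. simpl. auto. Qed.
Lemma gpow_mul (G : group) (x : G) m p : gpow (gpow x m) p = gpow x (m * p).
Proof. induction p; simpl. rewrite muln0. auto. rewrite IHp.
  replace (m * S p)%nat with (m + m * p)%nat by lia. rewrite gpow_add. auto. Qed.
Lemma conj_pow (G : group) (t x : G) m : gmul (gmul t (gpow x m)) (ginv t) = gpow (gmul (gmul t x) (ginv t)) m.
Proof. induction m; simpl. rewrite gmul1r gmulVr. auto.
  rewrite -IHm. ra. rewrite (cancel_l' G t). auto. Qed.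
Lemma comm_inv (G : group) (t x y : G) : gmul t x = gmul y t -> gmul x (ginv t) = gmul (ginv t) y.
Proof. intros H. apply (mul_left_inj G t). rewrite cancel_l. rewrite gmulA H. ra. rewrite gmulVr gmul1r. auto. Qed.

Lemma hom_one (G H : group) (f : G -> H) : group_hom f -> f gone = gone.
Proof. intros Hf. apply (mul_left_inj H (f gone)). rewrite -Hf. rewrite !gmul1r. auto. Qed.
Lemma hom_inv (G H : group) (f : G -> H) x : group_hom f -> f (ginv x) = ginv (f x).
Proof. intros Hf. apply inv_unique. rewrite -Hf gmulVl. apply hom_one; auto. Qed.
Lemma hom_pow (G H : group) (f : G -> H) x m : group_hom f -> f (gpow x m) = gpow (f x) m.
Proof. intros Hf. induction m; simpl. apply hom_one; auto. rewrite Hf IHm. auto. Qed.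

Definition Az (G : group) (a : G) (c : Z) : G :=
  if (0 <=? c)%Z then gpow a (Z.to_nat c) else gpow (ginv a) (Z.to_nat (- c)).

Lemma Az_hom (G H : group) (f : G -> H) a c : group_hom f -> f (Az G a c) = Az H (f a) c.
Proof. intros Hf. unfold Az. destruct (0 <=? c)%Z. apply hom_pow; auto.
  rewrite hom_pow; auto. rewrite hom_inv; auto. Qed.

Lemma Az_succ (G : group) (a : G) c : gmul a (Az G a c) = Az G a (c + 1).
Proof. unfold Az. destruct (Z.leb_spec 0 c); destruct (Z.leb_spec 0 (c + 1)); try lia.
  - replace (Z.to_nat (c + 1)) with (S (Z.to_nat c)) by lia. auto.
  - destruct (Z.eq_dec c (-1)).
    + subst. simpl. rewrite gmul1r gmulVr. auto.
    + lia.
  - replace (Z.to_nat (- c)) with (S (Z.to_nat (- (c + 1)))) by lia. simpl. apply cancel_l.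
Qed.
Lemma Az_pred (G : group) (a : G) c : gmul (ginv a) (Az G a c) = Az G a (c - 1).
Proof. replace c with ((c - 1) + 1)%Z at 1 by lia. rewrite -Az_succ. apply cancel_l'. Qed.
Lemma Az_pow (G : group) (a : G) m c : gmul (gpow a m) (Az G a c) = Az G a (Z.of_nat m + c).
Proof. induction m. simpl. rewrite gmul1l. f_equal; lia. change (gpow a (S m)) with (gmul a (gpow a m)).
  rewrite -gmulA IHm Az_succ. f_equal. lia. Qed.
Lemma Az_powinv (G : group) (a : G) m c : gmul (gpow (ginv a) m) (Az G a c) = Az G a (c - Z.of_nat m).
Proof. induction m. simpl. rewrite gmul1l. f_equal; lia. change (gpow (ginv a) (S m)) with (gmul (ginv a) (gpow (ginv a) m)).
  rewrite -gmulA IHm Az_pred. f_equal. lia. Qed.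
Lemma Az_0 (G : group) (a : G) : Az G a 0 = gone. Proof. reflexivity. Qed.

Lemma BSR1 (G : group) n (a t : G) m : bs_rel n a t -> gmul t (gpow a m) = gmul (gpow a (n * m)) t.
Proof. intros Hb. rewrite -gpow_mul. unfold bs_rel in Hb. rewrite -Hb. rewrite -conj_pow.
  ra. rewrite gmulVl gmul1r. auto. Qed.
Lemma BSR2 (G : group) n (a t : G) m : bs_rel n a t -> gmul t (gpow (ginv a) m) = gmul (gpow (ginv a) (n * m)) t.
Proof. intros Hb. rewrite -gpow_mul. rewrite (gpow_inv G a n). unfold bs_rel in Hb. rewrite -Hb.
  rewrite !ginv_mul ginv_ginv (gmulA t (ginv a) (ginv t)) -conj_pow. ra. rewrite gmulVl gmul1r. auto. Qed.

Lemma Az_t (G : group) n (a t : G) c : (1 <= n)%coq_nat -> bs_rel n a t ->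
  gmul t (Az G a c) = gmul (Az G a (Z.of_nat n * c)) t.
Proof. intros Hn Hb. unfold Az. destruct (Z.leb_spec 0 c); destruct (Z.leb_spec 0 (Z.of_nat n * c)).
  - rewrite (BSR1 G n a t _ Hb). f_equal. f_equal. lia.
  - exfalso. nia.
  - exfalso. nia.
  - rewrite (BSR2 G n a t _ Hb). f_equal. f_equal. nia.
Qed.

Lemma R3 (G : group) n (a t : G) (Hb : bs_rel n a t) e : forall m,
  gmul (gpow a m) (gpow (ginv t) e) = gmul (gpow (ginv t) e) (gpow a (m * n ^ e)).
Proof. induction e; intros m; simpl. rewrite gmul1l gmul1r muln1. auto.
  rewrite gmulA. rewrite (comm_inv G t (gpow a m) (gpow a (n * m))); [|apply BSR1; auto].
  ra. rewrite IHe. f_equal. f_equal. f_equal. rewrite expnS. nia. Qed.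
Lemma R4 (G : group) n (a t : G) (Hb : bs_rel n a t) e : forall m,
  gmul (gpow (ginv a) m) (gpow (ginv t) e) = gmul (gpow (ginv t) e) (gpow (ginv a) (m * n ^ e)).
Proof. induction e; intros m; simpl. rewrite gmul1l gmul1r muln1. auto.
  rewrite gmulA. rewrite (comm_inv G t (gpow (ginv a) m) (gpow (ginv a) (n * m))); [|apply BSR2; auto].
  ra. rewrite IHe. f_equal. f_equal. f_equal. rewrite expnS. nia. Qed.

Definition NF (G : group) (a t : G) (e : nat) (c : Z) (j : nat) : G :=
  gmul (gmul (gpow (ginv t) e) (Az G a c)) (gpow t j).
Definition isNF (G : group) (a t : G) (x : G) : Prop := exists e c j, x = NF G a t e c j.

Lemma NF_closed (G : group) n (a t : G) (Hn : (1 <= n)%coq_nat) (Hb : bs_rel n a t) x :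
  isNF G a t x -> isNF G a t (gmul a x) /\ isNF G a t (gmul (ginv a) x) /\
                 isNF G a t (gmul t x) /\ isNF G a t (gmul (ginv t) x).
Proof.
  intros [e [c [j ->]]]. unfold NF. split; [|split; [|split]].
  - exists e, (Z.of_nat (n ^ e) + c)%Z, j. unfold NF.
    assert (E : a = gpow a 1) by (simpl; rewrite gmul1r; auto).
    rewrite gmulA gmulA. rewrite {1}E (R3 G n a t Hb). rewrite mul1n. ra.
    rewrite (gmulA (gpow a _)). rewrite Az_pow. auto.
  - exists e, (c - Z.of_nat (n ^ e))%Z, j. unfold NF.
    assert (E : ginv a = gpow (ginv a) 1) by (simpl; rewrite gmul1r; auto).
    rewrite gmulA gmulA. rewrite {1}E (R4 G n a t Hb). rewrite mul1n. ra.
    rewrite (gmulA (gpow (ginv a) _)). rewrite Az_powinv. auto.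
  - destruct e as [|e].
    + exists 0%nat, (Z.of_nat n * c)%Z, (S j). unfold NF. simpl. rewrite !gmul1l.
      rewrite gmulA (Az_t G n a t c Hn Hb). ra. auto.
    + exists e, c, j. unfold NF. simpl. ra. rewrite cancel_l. auto.
  - exists (S e), c, j. unfold NF. simpl. ra. auto.
Qed.

Lemma all_NF (G : group) n (a t : G) (Hn : (1 <= n)%coq_nat) (Hb : bs_rel n a t) :
  (forall g : G, gen_by a t g) -> forall x : G, isNF G a t x.
Proof.
  intros Hgen.
  assert (Q : forall x, gen_by a t x -> (forall y, isNF G a t y -> isNF G a t (gmul x y)) /\
                                          (forall y, isNF G a t y -> isNF G a t (gmul (ginv x) y))).
  { intros x Hx. induction Hx.
    - split; intros y Hy; apply (NF_closed G n a t Hn Hb y Hy).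
    - split; intros y Hy; apply (NF_closed G n a t Hn Hb y Hy).
    - split; intros y Hy. rewrite gmul1l; auto. rewrite ginv_one gmul1l; auto.
    - destruct IHHx1, IHHx2. split; intros z Hz.
      + rewrite -gmulA. auto.
      + rewrite ginv_mul. rewrite -gmulA. auto.
    - destruct IHHx. split; intros y Hy; auto. rewrite ginv_ginv. auto. }
  intros x. rewrite -(gmul1r x). apply Q. apply Hgen.
  exists 0%nat, 0%Z, 0%nat. unfold NF. simpl. rewrite !gmul1l. auto.
Qed.

Definition aH n : Hc n := mkH n 0 1 (inZn_IZR n 1).
Definition tH n : Hc n := mkH n 1 0 (inZn_0 n).

Lemma hk_gmul n Hn (x y : Hgrp n Hn) : hk (gmul x y) = (hk x + hk y)%Z. Proof. reflexivity. Qed.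
Lemma hb_gmul n Hn (x y : Hgrp n Hn) : hb (gmul x y) = hb x + pw n (hk x) * hb y. Proof. reflexivity. Qed.
Lemma hk_ginv n Hn (x : Hgrp n Hn) : hk (ginv x) = (- hk x)%Z. Proof. reflexivity. Qed.
Lemma hb_ginv n Hn (x : Hgrp n Hn) : hb (ginv x) = - (pw n (- hk x) * hb x). Proof. reflexivity. Qed.
Lemma hk_gone n Hn : hk (@gone (Hgrp n Hn)) = 0%Z. Proof. reflexivity. Qed.
Lemma hb_gone n Hn : hb (@gone (Hgrp n Hn)) = 0. Proof. reflexivity. Qed.

Lemma pow_b n Hn (x : Hgrp n Hn) m : hk x = 0%Z -> hk (gpow x m) = 0%Z /\ hb (gpow x m) = INR m * hb x.
Proof. intros H0. induction m as [|m IH]. split. reflexivity. change (hb (@gone (Hgrp n Hn)) = INR 0 * hb x). rewrite hb_gone. simpl. ring.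
  change (gpow x (S m)) with (gmul x (gpow x m)). destruct IH as [I1 I2]. rewrite hk_gmul hb_gmul I1 I2 H0 pw_0. split. lia. rewrite S_INR. ring. Qed.
Lemma pow_k n Hn (x : Hgrp n Hn) m : hb x = 0 -> hk (gpow x m) = (Z.of_nat m * hk x)%Z /\ hb (gpow x m) = 0.
Proof. intros H0. induction m as [|m IH]. split; reflexivity.
  change (gpow x (S m)) with (gmul x (gpow x m)). destruct IH as [I1 I2]. rewrite hk_gmul hb_gmul I1 I2 H0. split. lia. ring. Qed.

Lemma AzH n Hn c : hk (Az (Hgrp n Hn) (aH n) c) = 0%Z /\ hb (Az (Hgrp n Hn) (aH n) c) = IZR c.
Proof. unfold Az. destruct (Z.leb_spec 0 c).
  - destruct (pow_b n Hn (aH n) (Z.to_nat c) (Logic.eq_refl)) as [E1 E2]. rewrite E1 E2. split; auto.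
    unfold aH. rewrite hb_mkH. rewrite INR_IZR_INZ Z2Nat.id; auto. ring.
  - destruct (pow_b n Hn (@ginv (Hgrp n Hn) (aH n)) (Z.to_nat (- c)) (Logic.eq_refl)) as [E1 E2]. rewrite E1 E2. split; auto.
    rewrite hb_ginv. unfold aH. rewrite hb_mkH hk_mkH pw_0. rewrite INR_IZR_INZ Z2Nat.id; [|lia].
    rewrite opp_IZR. ring. Qed.

Lemma NF_H n Hn e c j : hk (NF (Hgrp n Hn) (aH n) (tH n) e c j) = (Z.of_nat j - Z.of_nat e)%Z /\
  hb (NF (Hgrp n Hn) (aH n) (tH n) e c j) = pw n (- Z.of_nat e) * IZR c.
Proof. unfold NF. destruct (AzH n Hn c) as [A1 A2].
  destruct (pow_k n Hn (@ginv (Hgrp n Hn) (tH n)) e ltac:(rewrite hb_ginv; unfold tH; rewrite hb_mkH; ring)) as [B1 B2].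
  destruct (pow_k n Hn (tH n) j (Logic.eq_refl)) as [C1 C2].
  rewrite hk_gmul hb_gmul hk_gmul hb_gmul A1 A2 B1 B2 C1 C2. rewrite hk_ginv. unfold tH. rewrite hk_mkH.
  split. lia. rewrite Rplus_0_l Rmult_0_r Rplus_0_r. f_equal. f_equal. lia. Qed.

Lemma bs_H n Hn : bs_rel (G := Hgrp n Hn) n (aH n) (tH n).
Proof. unfold bs_rel. apply Heq.
  - rewrite hk_gmul hk_gmul hk_ginv. destruct (pow_b n Hn (aH n) n (Logic.eq_refl)) as [E1 E2]. rewrite E1.
    unfold tH, aH. rewrite !hk_mkH. lia.
  - rewrite hb_gmul hb_gmul hk_gmul hb_ginv. destruct (pow_b n Hn (aH n) n (Logic.eq_refl)) as [E1 E2]. rewrite E2.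
    unfold tH, aH. rewrite !hk_mkH !hb_mkH. rewrite pw_1. ring. Qed.

Lemma f_NF (G : group) n Hn (a t : G) (f : G -> Hgrp n Hn) : group_hom f -> f a = aH n -> f t = tH n ->
  forall e c j, f (NF G a t e c j) = NF (Hgrp n Hn) (aH n) (tH n) e c j.
Proof. intros Hf Ha Ht e c j. unfold NF.
  rewrite (Hf (gmul (gpow (ginv t) e) (Az G a c)) (gpow t j)) (Hf (gpow (ginv t) e) (Az G a c)).
  rewrite (Az_hom G _ f a c Hf) (hom_pow G _ f (ginv t) e Hf) (hom_pow G _ f t j Hf) (hom_inv G _ f t Hf) Ha Ht.
  auto. Qed.

Lemma f_inj (G : group) n Hn (a t : G) (f : G -> Hgrp n Hn) : group_hom f -> f a = aH n -> f t = tH n ->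
  bs_rel n a t -> (forall g : G, gen_by a t g) -> forall x y, f x = f y -> x = y.
Proof.
  intros Hf Ha Ht Hb Hg x y Hxy.
  assert (Hk : forall z, f z = gone -> z = gone).
  { intros z Hz. destruct (all_NF G n a t Hn Hb Hg z) as [e [c [j ->]]].
    rewrite (f_NF G n Hn a t f Hf Ha Ht) in Hz. destruct (NF_H n Hn e c j) as [E1 E2].
    rewrite Hz hk_gone in E1. rewrite Hz hb_gone in E2.
    pose proof (pw_pos n (- Z.of_nat e) Hn).
    assert (c = 0%Z). { apply eq_IZR. apply (Rmult_eq_reg_l (pw n (- Z.of_nat e))); lra. }
    assert (j = e) by lia. subst. unfold NF. rewrite Az_0 gmul1r. rewrite gpow_inv gmulVl. auto. }
  assert (E : gmul (ginv y) x = gone).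
  { apply Hk. rewrite Hf hom_inv; auto. rewrite Hxy gmulVl. auto. }
  apply (mul_left_inj G (ginv y)). rewrite E gmulVl. auto.
Qed.

Lemma f_surj (G : group) n Hn (a t : G) (f : G -> Hgrp n Hn) : group_hom f -> f a = aH n -> f t = tH n ->
  forall h : Hgrp n Hn, exists g, f g = h.
Proof.
  intros Hf Ha Ht h. destruct (hb_inZn h) as [e [He [c Hc]]].
  set (E := Z.to_nat (e + Z.abs (hk h))).
  assert (HE : isZ (hb h * pw n (Z.of_nat E))).
  { replace (Z.of_nat E) with (e + Z.abs (hk h))%Z by (unfold E; lia). rewrite pw_add; auto.
    rewrite -Rmult_assoc Hc. apply isZ_mul. apply isZ_IZR. apply pw_isZ; lia. }
  destruct HE as [c' Hc'].
  exists (NF G a t E c' (Z.to_nat (Z.of_nat E + hk h))).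
  rewrite (f_NF G n Hn a t f Hf Ha Ht). destruct (NF_H n Hn E c' (Z.to_nat (Z.of_nat E + hk h))) as [E1 E2].
  apply Heq. rewrite E1. unfold E. lia.
  rewrite E2 -Hc'. rewrite Rmult_comm Rmult_assoc. rewrite (Rmult_comm _ (pw n (- _))).
  rewrite pw_opp; auto. ring. Qed.

Definition Xf (A B : Type) (i : 'I_2) : Type := if (nat_of_ord i == 0)%N then A else B.
Definition df (A B : Type) (dA : A -> A -> R) (dB : B -> B -> R) (i : 'I_2) : Xf A B i -> Xf A B i -> R :=
  match (nat_of_ord i == 0)%N as c return ((if c then A else B) -> (if c then A else B) -> R) with
  | true => dA | false => dB end.
Definition actf (G : Type) (A B : Type) (aA : G -> A -> A) (aB : G -> B -> B) (i : 'I_2) : G -> Xf A B i -> Xf A B i :=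
  match (nat_of_ord i == 0)%N as c return (G -> (if c then A else B) -> (if c then A else B)) with
  | true => aA | false => aB end.

Definition props (G : group) {X : Type} (d : X -> X -> R) (act : G -> X -> X) : Prop :=
  is_metric d /\ geodesic_space d /\ proper_space d /\
       gromov_hyperbolic d /\ unbounded d /\
       isometric_action d act /\ cocompact_action d act.

Lemma sum2 (F : 'I_2 -> R) : \big[Rplus/0]_(i < 2) F i = F ord0 + (F (lift ord0 ord0) + 0).
Proof. rewrite big_ord_recl big_ord_recl big_ord0. reflexivity. Qed.

Lemma PPH_of_two (G : group) (A B : Type) (dA : A -> A -> R) (dB : B -> B -> R)
  (aA : G -> A -> A) (aB : G -> B -> B) :
  props G dA aA -> props G dB aB ->
  (forall (zA : A) (zB : B) (r : R), exists s : list G, forall g : G,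
      dA zA (aA g zA) + dB zB (aB g zB) <= r -> In g s) -> PPH G.
Proof.
  intros PA PB Hp. exists 2%nat. split. by [].
  exists (Xf A B), (df A B dA dB), (actf G A B aA aB). split.
  - intros [[|[|m]] Hm]; [exact PA | exact PB | discriminate].
  - intros z r. destruct (Hp (z ord0) (z (lift ord0 ord0)) r) as [s Hs].
    exists s. intros g Hg. apply Hs.
    rewrite (sum2 (fun i => df A B dA dB i (z i) (actf G A B aA aB i g (z i)))) in Hg.
    rewrite Rplus_0_r in Hg. exact Hg.
Qed.

Lemma isom_pull (G Hg : group) (f : G -> Hg) {X : Type} (d : X -> X -> R) (actH : Hg -> X -> X) :
  group_hom f -> isometric_action d actH -> isometric_action d (fun g => actH (f g)).
Proof. intros Hf [H1 [H2 H3]]. split; [|split].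
  - intros x. rewrite hom_one; auto.
  - intros g h x. rewrite Hf. auto.
  - intros g x y. auto. Qed.

Lemma cocompact_pull (G Hg : group) (f : G -> Hg) {X : Type} (d : X -> X -> R) (actH : Hg -> X -> X) (Kc : X -> Prop) :
  (forall h, exists g, f g = h) -> compact_set d Kc -> (forall x, exists h y, Kc y /\ actH h y = x) ->
  cocompact_action d (fun g => actH (f g)).
Proof. intros Hs Hc Hcov. exists Kc. split; auto. intros x. destruct (Hcov x) as [h [y [Hy E]]].
  destruct (Hs h) as [g Hg']. exists g, y. split; auto. rewrite Hg'. auto. Qed.

Definition zr (M : nat) : list Z := map (fun i => (Z.of_nat i - Z.of_nat M)%Z) (List.seq 0 (2 * M + 1)).
Lemma in_zr M z : (Z.abs z <= Z.of_nat M)%Z -> In z (zr M).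
Proof. intros H. unfold zr. apply in_map_iff. exists (Z.to_nat (z + Z.of_nat M)). split. lia.
  apply in_seq. lia. Qed.

Lemma list_bounds (G : group) n Hn (a t : G) (f : G -> Hgrp n Hn) :
  group_hom f -> f a = aH n -> f t = tH n -> bs_rel n a t -> (forall g : G, gen_by a t g) ->
  forall K E Cn : nat, exists s : list G, forall g,
    (Z.abs (hk (f g)) <= Z.of_nat K)%Z ->
    (exists c, hb (f g) * pw n (Z.of_nat E) = IZR c /\ (Z.abs c <= Z.of_nat Cn)%Z) -> In g s.
Proof.
  intros Hf Ha Ht Hb Hgen K E Cn.
  set (E' := (E + K)%nat). set (M := (Cn * Nat.pow n K)%nat).
  exists (flat_map (fun k => map (fun c => NF G a t E' c (Z.to_nat (Z.of_nat E' + k))) (zr M)) (zr K)).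
  intros g Hk [c [Hc Hcb]].
  apply in_flat_map. exists (hk (f g)). split. apply in_zr; auto.
  apply in_map_iff. exists (c * Z.of_nat (Nat.pow n K))%Z. split.
  - apply (f_inj G n Hn a t f Hf Ha Ht Hb Hgen). rewrite (f_NF G n Hn a t f Hf Ha Ht).
    destruct (NF_H n Hn E' (c * Z.of_nat (Nat.pow n K)) (Z.to_nat (Z.of_nat E' + hk (f g)))) as [E1 E2].
    apply Heq. rewrite E1. unfold E'. lia.
    rewrite E2. rewrite mult_IZR -Hc. rewrite -INR_IZR_INZ pow_INR -pw_nat.
    replace (- Z.of_nat E')%Z with (- Z.of_nat E + - Z.of_nat K)%Z by (unfold E'; lia).
    rewrite !pw_add; auto. 
    pose proof (pw_opp n (Z.of_nat E) Hn). pose proof (pw_opp n (Z.of_nat K) Hn).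
    transitivity (hb (f g) * (pw n (- Z.of_nat E) * pw n (Z.of_nat E)) * (pw n (- Z.of_nat K) * pw n (Z.of_nat K))).
    ring. rewrite H H0. ring.
  - apply in_zr. unfold M. 
    assert (0 <= Z.of_nat (Nat.pow n K))%Z by lia.
    rewrite Z.abs_mul. rewrite (Z.abs_eq (Z.of_nat _)); auto. rewrite Nat2Z.inj_mul. nia.
Qed.

Lemma tree_bound n Hn (z : T2 n) r : exists K E : nat, forall h : Hc n,
  dT n Hn z (actT n Hn h z) <= r -> (Z.abs (hk h) <= Z.of_nat K)%Z /\ isZ (hb h * pw n (Z.of_nat E)).
Proof.
  destruct (rh_inZn z) as [e0 [He0 [c0 Hc0]]].
  set (Jt := fl (sh z + r)).
  exists (Z.to_nat (up r)), (Z.to_nat (Z.abs (Jt + e0))). intros h Hd. split.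
  - pose proof (dT_ge n Hn z (actT n Hn h z)). rewrite sh_actT in H.
    replace (sh z - (sh z - IZR (hk h))) with (IZR (hk h)) in H by ring. rewrite -abs_IZR in H.
    destruct (archimed r) as [H1 _]. assert (IZR (Z.abs (hk h)) < IZR (up r)) by lra.
    apply lt_IZR in H0. lia.
  - set (k := hk h). set (b := hb h). set (s := sh z). set (rho := rh z).
    pose proof (ust_ge n Hn z (actT n Hn h z)) as [G1 G2]. rewrite sh_actT in G2.
    assert (Hu : ust n Hn z (actT n Hn h z) <= sh z + r).
    { unfold dT in Hd. rewrite sh_actT in Hd. lra. }
    assert (HJ : (fl (ust n Hn z (actT n Hn h z)) <= Jt)%Z) by (apply fl_le; lra).
    assert (Hm : merged n Jt z (actT n Hn h z)).
    { apply (merged_up n (fl (ust n Hn z (actT n Hn h z)))); auto. apply T3. }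
    assert (F1 : (fl s <= Jt)%Z). { pose proof (fl_le _ _ G1). fold s in H. lia. }
    assert (F2 : (fl s - k <= Jt)%Z). { pose proof (fl_le _ _ G2). rewrite fl_subZ in H. fold s k in H. lia. }
    unfold merged in Hm. rewrite lift_actT in Hm; [|fold s k; lia].
    unfold liftT in Hm. rewrite frac_plus_frac in Hm. fold s rho k b in Hm.
    apply frac_eq_iff in Hm. destruct Hm as [w Hw].
    assert (HZ : isZ (b * pw n (Jt + e0))).
    { replace (b * pw n (Jt + e0)) with
        ((pw n (Jt - fl s) - pw n (Jt + k - fl s)) * (rho * pw n e0) - IZR w * pw n e0).
      2: { rewrite pw_add; auto. replace (Jt + k - fl s)%Z with (Jt + k - fl s)%Z by lia.
           rewrite -Hw. ring. }
      apply isZ_sub. apply isZ_mul. apply isZ_sub; apply pw_isZ; lia. exists c0; auto.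
      apply isZ_mul. apply isZ_IZR. apply pw_isZ; lia. }
    replace (Z.of_nat (Z.to_nat (Z.abs (Jt + e0)))) with ((Jt + e0) + (Z.abs (Jt + e0) - (Jt + e0)))%Z by lia.
    rewrite pw_add; auto. rewrite -Rmult_assoc. apply isZ_mul; auto. apply pw_isZ. lia.
Qed.

Lemma dP_Dbound p q r : dP p q <= r -> Dp p q <= r * exp (snd p + r) / 2.
Proof. intros H. rewrite dP_eq in H. destruct (ustP_ge p q) as [G1 G2].
  pose proof (exp_pos (- ustP p q)). pose proof (Dp_ge0 p q).
  assert (0 <= Dp p q * exp (- ustP p q)) by nra.
  assert (E : exp (- ustP p q) * exp (ustP p q) = 1) by (rewrite -exp_plus; replace (- ustP p q + ustP p q) with 0 by ring; apply exp_0).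
  pose proof (exp_pos (ustP p q)).
  assert (2 * Dp p q * exp (- ustP p q) * exp (ustP p q) <= r * exp (ustP p q)) by (apply Rmult_le_compat_r; lra).
  replace (2 * Dp p q * exp (- ustP p q) * exp (ustP p q)) with (2 * Dp p q * (exp (- ustP p q) * exp (ustP p q))) in H4 by ring.
  rewrite E in H4. assert (exp (ustP p q) <= exp (snd p + r)) by (apply exp_le; lra).
  assert (0 <= r) by lra. nra. Qed.

Lemma plane_bound n Hn (z : P2) r (K : nat) : exists C : R, forall h : Hc n,
  (Z.abs (hk h) <= Z.of_nat K)%Z -> dP z (actP n Hn h z) <= r -> Rabs (hb h) <= C.
Proof.
  exists (r * exp (snd z + r) / 2 + (pw n (Z.of_nat K) + 1) * Rabs (fst z)).
  intros h Hk Hd. apply dP_Dbound in Hd. unfold Dp, actP in Hd. simpl in Hd.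
  set (lam := pw n (hk h)) in *.
  assert (Hl : 0 < lam) by (apply pw_pos; auto).
  assert (HlK : lam <= pw n (Z.of_nat K)) by (apply pw_mono; auto; lia).
  replace (hb h) with ((lam * fst z + hb h - fst z) - (lam - 1) * fst z) by ring.
  unfold Rminus at 2. eapply Rle_trans. apply Rabs_triang. rewrite Rabs_Ropp Rabs_mult.
  rewrite Rabs_minus_sym in Hd.
  replace (lam * fst z + hb h + - fst z) with (lam * fst z + hb h - fst z) by ring.
  assert (Rabs (lam - 1) <= pw n (Z.of_nat K) + 1) by (unfold Rabs; destruct Rcase_abs; lra).
  pose proof (Rabs_pos (fst z)). pose proof (Rabs_pos (lam - 1)).
  assert (Rabs (lam - 1) * Rabs (fst z) <= (pw n (Z.of_nat K) + 1) * Rabs (fst z)) by nra. lra.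
Qed.

Lemma metric_nonneg {X : Type} (d : X -> X -> R) : is_metric d -> forall x y, 0 <= d x y.
Proof. intros [H0 [Hs Ht]] x y. pose proof (Ht x y x). rewrite (Hs y x) in H.
  assert (d x x = 0) by (apply H0; auto). lra. Qed.

Lemma finish (G : group) n Hn (a t : G) (f : G -> Hgrp n Hn) :
  group_hom f -> f a = aH n -> f t = tH n -> bs_rel n a t -> (forall g : G, gen_by a t g) ->
  forall {A B : Type} (dA : A -> A -> R) (dB : B -> B -> R) (aA : Hc n -> A -> A) (aB : Hc n -> B -> B),
  is_metric dA -> is_metric dB ->
  (forall zA zB r, exists (K E : nat) (C : R), forall h, dA zA (aA h zA) <= r -> dB zB (aB h zB) <= r ->
      (Z.abs (hk h) <= Z.of_nat K)%Z /\ isZ (hb h * pw n (Z.of_nat E)) /\ Rabs (hb h) <= C) ->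
  forall zA zB r, exists s : list G, forall g, dA zA (aA (f g) zA) + dB zB (aB (f g) zB) <= r -> In g s.
Proof.
  intros Hf Ha Ht Hb Hgen A B dA dB aA aB HA HB Hbd zA zB r.
  destruct (Hbd zA zB r) as [K [E [C HC]]].
  set (Cn := Z.to_nat (up (C * pw n (Z.of_nat E)))).
  destruct (list_bounds G n Hn a t f Hf Ha Ht Hb Hgen K E Cn) as [s Hs].
  exists s. intros g Hg.
  pose proof (metric_nonneg dA HA zA (aA (f g) zA)). pose proof (metric_nonneg dB HB zB (aB (f g) zB)).
  destruct (HC (f g) ltac:(lra) ltac:(lra)) as [H1 [[c Hc] H3]].
  apply Hs; auto. exists c. split; auto.
  pose proof (pw_pos n (Z.of_nat E) Hn).
  assert (IZR (Z.abs c) <= C * pw n (Z.of_nat E)).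
  { rewrite abs_IZR -Hc Rabs_mult (Rabs_pos_eq (pw n _)); [|lra]. apply Rmult_le_compat_r; lra. }
  destruct (archimed (C * pw n (Z.of_nat E))) as [Har _].
  assert (Hlt : IZR (Z.abs c) < IZR (up (C * pw n (Z.of_nat E)))) by lra. apply lt_IZR in Hlt. unfold Cn. lia.
Qed.

Theorem lemma3p11 : forall (n : nat), (1 <= n)%nat ->
  forall (G : group) (a t : G), is_BS1n n a t -> PPH G.
Proof.
  intros n Hn0 G a t [Hb [Hgen Huniv]].
  pose proof (leq_coq _ _ Hn0) as Hn.
  destruct (Huniv (Hgrp n Hn) (aH n) (tH n) (bs_H n Hn)) as [f [Hf [Ha Ht]]].
  assert (PT : props G (dT n Hn) (fun g => actT n Hn (f g))).
  { split; [apply dT_metric|]. split; [apply dT_geod|]. split; [apply dT_proper|].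
    split; [apply dT_hyp|]. split; [apply dT_unbounded|]. split.
    - apply isom_pull; auto. apply actT_isom.
    - apply (cocompact_pull G (Hgrp n Hn) f (dT n Hn) (actT n Hn) (KT n)).
      apply (f_surj G n Hn a t f Hf Ha Ht). apply KT_compact. apply KT_cover. }
  destruct (Nat.eq_dec n 1) as [E1|E1].
  - subst n. assert (Hn = one_le1) by apply proof_irrelevance. subst Hn.
    apply (PPH_of_two G _ _ (dT 1 one_le1) (dT 1 one_le1) (fun g => actS (f g)) (fun g => actT 1 one_le1 (f g))).
    + split; [apply dT_metric|]. split; [apply dT_geod|]. split; [apply dT_proper|].
      split; [apply dT_hyp|]. split; [apply dT_unbounded|]. split.
      * apply isom_pull; auto. apply actS_isom.
      * apply (cocompact_pull G (Hgrp 1 one_le1) f (dT 1 one_le1) actS (KT 1)).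
        apply (f_surj G 1 one_le1 a t f Hf Ha Ht). apply KT_compact. apply KS_cover.
    + exact PT.
    + apply (finish G 1 one_le1 a t f Hf Ha Ht Hb Hgen (dT 1 one_le1) (dT 1 one_le1) actS (actT 1 one_le1)).
      apply dT_metric. apply dT_metric.
      intros zA zB r. destruct (tree_bound 1 one_le1 zB r) as [K [E HKE]].
      exists K, E, r. intros h H1 H2. destruct (HKE h H2). split; auto. split; auto.
      rewrite dT1_eq sh_actS in H1. replace (sh zA - (sh zA + hb h)) with (- hb h) in H1 by ring.
      rewrite Rabs_Ropp in H1. auto.
  - assert (Hn2 : (2 <= n)%coq_nat) by lia.
    apply (PPH_of_two G _ _ dP (dT n Hn) (fun g => actP n Hn (f g)) (fun g => actT n Hn (f g))).
    + split; [apply dP_metric|]. split; [apply dP_geod|]. split; [apply dP_proper|].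
      split; [apply dP_hyp|]. split; [apply dP_unbounded|]. split.
      * apply isom_pull; auto. apply actP_isom.
      * apply (cocompact_pull G (Hgrp n Hn) f dP (actP n Hn) (KP n)).
        apply (f_surj G n Hn a t f Hf Ha Ht). apply KP_compact. apply (KP_cover n Hn Hn2).
    + exact PT.
    + apply (finish G n Hn a t f Hf Ha Ht Hb Hgen dP (dT n Hn) (actP n Hn) (actT n Hn)).
      apply dP_metric. apply dT_metric.
      intros zA zB r. destruct (tree_bound n Hn zB r) as [K [E HKE]].
      destruct (plane_bound n Hn zA r K) as [C HC].
      exists K, E, C. intros h H1 H2. destruct (HKE h H2). repeat split; auto.
Qed.
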